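(* Let $a,b\ge1$ be coprime with $a\le b$, let $A_{ij}$ denote the coefficient of $u^iv^jw^{a+b-1-i-j}$ in $P_{a/b}(u,v,w)$, with $A_{ij}=0$ for pairs not corresponding to a monomial of $P_{a/b}$, and let $\Delta_{a/b}=\{(i,j)\in\mathbb{R}^2: i,j\ge0,\ \frac ia+\frac jb\ge1,\ i+j\le a+b-1\}$. Then the coefficients on the line $j=1$ and on the line $i+j=a+b-2$ are strictly log-concave: for every lattice point $(i,1)\in\Delta_{a/b}$, $A_{i,1}^2>A_{i-1,1}A_{i+1,1}$; and for every lattice point $(i,j)\in\Delta_{a/b}$ with $i+j=a+b-2$, $A_{i,j}^2>A_{i-1,j+1}A_{i+1,j-1}$.
   Context: Markov polynomials. Let $x,y,z$ be indeterminates. Consider the set consisting of all rationals $\rho\in[0,1]$, each written in lowest terms $\rho=a/b$ with integers $a\ge 0$, $b\ge 1$, together with the formal symbol $1/0$. Define Laurent polynomials $M_\rho(x,y,z)$ recursively by $M_{1/0}=y$, $M_{0/1}=x$, $M_{1/1}=\frac{x^2+y^2}{z}$, and: whenever $a/b$, $c/d$ are in this set with $|ad-bc|=1$ and $(a+2c)/(b+2d)\in[0,1]$, then $M_{\frac{a+2c}{b+2d}}=\big(M_{c/d}^2+M_{\frac{a+c}{b+d}}^2\big)/M_{a/b}$. This determines $M_\rho$ for every rational $\rho\in[0,1]$. Numerator. For coprime $1\le a\le b$, $P_{a/b}(u,v,w)$ denotes the homogeneous polynomial of degree $a+b-1$ such that $M_{a/b}(x,y,z)=P_{a/b}(x^2,y^2,z^2)/(x^{a-1}y^{b-1}z^{a+b-1})$;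 its existence is known. *)

(* Defs.v *)
From HB Require Import structures.
From mathcomp Require Import all_boot all_order all_algebra.
From mathcomp Require Import fraction.
From mathcomp Require Import mpoly.
Set Implicit Arguments. Unset Strict Implicit. Unset Printing Implicit Defensive.
Import Order.TTheory GRing.Theory Num.Theory.
Local Open Scope ring_scope.

(* Polynomials in three variables u, v, w (= 'X_0, 'X_1, 'X_2) over Z. *)
Definition mpZ3 := {mpoly int[3]}.

(* The field Q(x,y,z) of rational functions (fraction field of Z[x,y,z]),
   where the Laurent polynomials M_rho live. *)
Definition RF := {fraction mpZ3}.
Definition toRF (p : mpZ3) : RF := @FracField.tofrac mpZ3 p.

Definition xF : RF := toRF 'X_0.
Definition yF : RF := toRF 'X_1.
Definition zF : RF := toRF 'X_2.

(* Index set: a fraction a/b in [0,1] in lowest terms (b >= 1), or 1/0.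
   A pair (a,b) of naturals stands for the fraction a/b. *)
Definition in_index (a b : nat) : bool :=
  coprime a b && ((a <= b)%N || (b == 0)%N).

Definition farey_nb (a b c d : nat) : bool :=
  ((a * d == b * c + 1) || (b * c == a * d + 1))%N.

(* M : nat -> nat -> RF (M a b = M_{a/b}) satisfies the defining recursion
   of the Markov polynomials. *)
Definition is_markov_family (M : nat -> nat -> RF) : Prop :=
  [/\ M 1%N 0%N = yF, M 0%N 1%N = xF, M 1%N 1%N = (xF ^+ 2 + yF ^+ 2) / zF &
      forall a b c d : nat,
        in_index a b -> in_index c d -> farey_nb a b c d ->
        (a + 2 * c <= b + 2 * d)%N ->
        M (a + 2 * c)%N (b + 2 * d)%N
          = (M c d ^+ 2 + M (a + c)%N (b + d)%N ^+ 2) / M a b].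

Definition sq_subst (P : mpZ3) : RF :=
  toRF (P \mPo [tuple ('X_0 : mpZ3) ^+ 2; ('X_1 : mpZ3) ^+ 2; ('X_2 : mpZ3) ^+ 2]).

Definition coefA (n : nat) (P : mpZ3) (i j : int) : int :=
  if (0 <= i) && (0 <= j) && (i + j <= n%:Z) then
    P@_[multinom [tuple `|i|%N; `|j|%N; (n - `|i| - `|j|)%N]]
  else 0.

Definition in_Delta (a b : nat) (i j : int) : bool :=
  [&& 0 <= i, 0 <= j, 1 <= (i%:~R / a%:R + j%:~R / b%:R : rat)
    & i + j <= (a + b)%:Z - 1].

(* Main.v *)
Require Import Defs.
From HB Require Import structures.
From mathcomp Require Import all_boot all_order all_algebra.
From mathcomp Require Import fraction.
From mathcomp Require Import mpoly.
From mathcomp Require Import ring.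
From mathcomp Require Import zify.
Set Implicit Arguments. Unset Strict Implicit. Unset Printing Implicit Defensive.
Import Order.TTheory GRing.Theory Num.Theory.
Local Open Scope ring_scope.
Ltac fld := field; rewrite ?oner_neq0 ?andbT ?andTb; repeat (apply/andP; split); try (by rewrite ?expf_neq0 ?mulf_neq0 ?invr_neq0).

Lemma toRFD p q : toRF (p + q) = toRF p + toRF q. Proof. exact: rmorphD. Qed.
Lemma toRFM p q : toRF (p * q) = toRF p * toRF q. Proof. exact: rmorphM. Qed.
Lemma toRFX p k : toRF (p ^+ k) = toRF p ^+ k. Proof. exact: rmorphXn. Qed.
Lemma toRFN p : toRF (- p) = - toRF p. Proof. exact: rmorphN. Qed.
Lemma toRFB p q : toRF (p - q) = toRF p - toRF q. Proof. exact: rmorphB. Qed.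
Lemma toRF1 : toRF 1 = 1. Proof. exact: rmorph1. Qed.
Lemma toRF0 : toRF 0 = 0. Proof. exact: rmorph0. Qed.
Lemma toRF_inj p q : toRF p = toRF q -> p = q.
Proof. by move/eqP; rewrite /toRF tofrac_eq => /eqP. Qed.
Lemma toRF_eq0 p : (toRF p == 0) = (p == 0).
Proof. by rewrite /toRF tofrac_eq0. Qed.

Definition evt (i : 'I_3) : 3.-tuple mpZ3 :=
  [tuple (if j == i then 0 else 'X_j) | j < 3].
Definition ev (i : 'I_3) (q : mpZ3) : mpZ3 := q \mPo evt i.

Lemma evM i p q : ev i (p * q) = ev i p * ev i q.
Proof. exact: rmorphM. Qed.
Lemma evD i p q : ev i (p + q) = ev i p + ev i q.
Proof. exact: rmorphD. Qed.
Lemma evN i p : ev i (- p) = - ev i p.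
Proof. exact: rmorphN. Qed.
Lemma evX i p k : ev i (p ^+ k) = ev i p ^+ k.
Proof. exact: rmorphXn. Qed.
Lemma ev1 i : ev i 1 = 1.
Proof. exact: rmorph1. Qed.
Lemma evXi i : ev i 'X_i = 0.
Proof. by rewrite /ev comp_mpolyXU -tnth_nth tnth_mktuple eqxx. Qed.
Lemma evXj i j : j != i -> ev i 'X_j = 'X_j.
Proof. by move=> h; rewrite /ev comp_mpolyXU -tnth_nth tnth_mktuple (negbTE h). Qed.

Definition inO (i : 'I_3) (k : nat) (f : RF) :=
  exists p q : mpZ3, ev i q != 0 /\ f * toRF q = toRF ('X_i ^+ k * p).

Lemma ev_neq0 i q : ev i q != 0 -> q != 0.
Proof. by apply: contraNneq => ->; rewrite /ev raddf0. Qed.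

Lemma toRF_neq0 i q : ev i q != 0 -> toRF q != 0.
Proof. by move/ev_neq0; rewrite toRF_eq0. Qed.

Lemma inO_add i k f g : inO i k f -> inO i k g -> inO i k (f + g).
Proof.
move=> [p1 [q1 [h1 e1]]] [p2 [q2 [h2 e2]]].
exists (p1 * q2 + p2 * q1), (q1 * q2); split.
  by rewrite evM mulf_neq0.
rewrite toRFM mulrDl (mulrA f) e1 (mulrC (toRF q1)) mulrA e2.
by rewrite -!toRFM -toRFD; congr toRF; ring.
Qed.

Lemma inO_opp i k f : inO i k f -> inO i k (- f).
Proof.
move=> [p [q [h e]]]; exists (- p), q; split => //.
by rewrite mulNr e -toRFN; congr toRF; ring.
Qed.

Lemma inO_sub i k f g : inO i k f -> inO i k g -> inO i k (f - g).
Proof. by move=> hf hg; apply: inO_add => //; apply: inO_opp. Qed.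

Lemma inO_mul i k l f g : inO i k f -> inO i l g -> inO i (k + l) (f * g).
Proof.
move=> [p1 [q1 [h1 e1]]] [p2 [q2 [h2 e2]]].
exists (p1 * p2), (q1 * q2); split.
  by rewrite evM mulf_neq0.
rewrite toRFM mulrACA e1 e2 -toRFM; congr toRF; rewrite exprD; ring.
Qed.

Lemma inO_weaken i k l f : (l <= k)%N -> inO i k f -> inO i l f.
Proof.
move=> hl [p [q [h e]]]; exists ('X_i ^+ (k - l) * p), q; split => //.
by rewrite e mulrA -exprD subnKC.
Qed.

Lemma inO_poly i p : inO i 0 (toRF p).
Proof. by exists p, 1; split; rewrite ?ev1 ?oner_neq0 // toRF1 mulr1 expr0 mul1r. Qed.

Lemma inO_Xk i k : inO i k (toRF 'X_i ^+ k).
Proof. by exists 1, 1; split; rewrite ?ev1 ?oner_neq0 // toRF1 mulr1 mulr1 toRFX. Qed.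

Lemma inO_0 i k : inO i k 0.
Proof. by exists 0, 1; split; rewrite ?ev1 ?oner_neq0 // mul0r mulr0 toRF0. Qed.

Lemma inO_1 i : inO i 0 1.
Proof. by rewrite -toRF1; apply: inO_poly. Qed.

Lemma inO_invp i p : ev i p != 0 -> inO i 0 (toRF p)^-1.
Proof.
move=> h; exists 1, p; split => //.
rewrite mulVf; last exact: toRF_neq0 h.
by rewrite mulr1 expr0 toRF1.
Qed.

Lemma inO_inv1 i g : inO i 1 g -> inO i 0 (1 + g)^-1 /\ 1 + g != 0.
Proof.
move=> [p [q [h e]]].
have hs : ev i (q + 'X_i * p) != 0 by rewrite evD evM evXi mul0r addr0.
have e1 : (1 + g) * toRF q = toRF (q + 'X_i * p) by rewrite mulrDl mul1r e toRFD expr1.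
have nz : 1 + g != 0.
  apply/negP => /eqP h0; move: e1; rewrite h0 mul0r => /esym /eqP.
  by rewrite toRF_eq0 (negbTE (ev_neq0 hs)).
split=> //; exists q, (q + 'X_i * p); split => //.
by rewrite -e1 mulrA mulVf // mul1r expr0 mul1r.
Qed.

Lemma inO_nat i n : inO i 0 (n%:R).
Proof. by have := inO_poly i (n%:R); rewrite /toRF rmorph_nat. Qed.

Lemma inO_exp i k f n : inO i k f -> inO i (k * n) (f ^+ n).
Proof.
move=> h; elim: n => [|n IH]; first by rewrite muln0 expr0; apply: inO_1.
by rewrite exprS mulnS; apply: inO_mul.
Qed.

Lemma inO_mulW i k l m f g : inO i k f -> inO i l g -> (m <= k + l)%N -> inO i m (f * g).
Proof. by move=> hf hg hm; apply: (inO_weaken hm); apply: inO_mul. Qed.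

Lemma inO_t i k : inO i k (toRF 'X_i ^+ k). Proof. exact: inO_Xk. Qed.

Lemma master_id (F : fieldType) (t kap k r em s h D : F) :
  D = 1 + (t ^+ 2 * h + s) -> D != 0 ->
  ((kap + t ^+ 2 * k) + (1 + t ^+ 2 * em + r) ^+ 2) / D - 1
    - t ^+ 2 * (2%:R * em + k - h) =
  (kap + t ^+ 4 * em ^+ 2 + r * (2%:R + 2%:R * t ^+ 2 * em + r)
   - t ^+ 4 * (h * (2%:R * em + k - h)) - s * (1 + t ^+ 2 * (2%:R * em + k - h))) * D^-1.
Proof. by move=> -> hD; field. Qed.

Lemma master i (MTw K Mmw D h k em : RF) :
  MTw = (K + Mmw ^+ 2) / D ->
  inO i 4 (D - 1 - toRF 'X_i ^+ 2 * h) ->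
  inO i 4 (K - toRF 'X_i ^+ 2 * k) ->
  inO i 4 (Mmw - 1 - toRF 'X_i ^+ 2 * em) ->
  inO i 0 em -> inO i 0 h -> inO i 0 k ->
  inO i 4 (MTw - 1 - toRF 'X_i ^+ 2 * (2%:R * em + k - h)).
Proof.
set t := toRF 'X_i.
move=> eT hs hk hr he hh hkk.
set s := D - 1 - t ^+ 2 * h in hs.
set kap := K - t ^+ 2 * k in hk.
set r := Mmw - 1 - t ^+ 2 * em in hr.
have eD : D = 1 + (t ^+ 2 * h + s) by rewrite /s; ring.
have hg : inO i 1 (t ^+ 2 * h + s).
  apply: inO_add; first by apply: (inO_mulW (inO_t i 2) hh).
  exact: (inO_weaken _ hs).
have [hDi hD0] := inO_inv1 hg; rewrite -eD in hDi hD0.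
have eK : K = kap + t ^+ 2 * k by rewrite /kap; ring.
have eM : Mmw = 1 + t ^+ 2 * em + r by rewrite /r; ring.
set eT' := 2%:R * em + k - h.
have -> : MTw - 1 - t ^+ 2 * eT' =
  (kap + t ^+ 4 * em ^+ 2 + r * (2%:R + 2%:R * t ^+ 2 * em + r)
   - t ^+ 4 * (h * eT') - s * (1 + t ^+ 2 * eT')) * D^-1.
  by rewrite eT eK eM /eT'; apply: master_id.
have heT : inO i 0 eT'.
  by rewrite /eT'; apply: inO_sub => //; apply: inO_add => //;
     apply: (inO_mulW (inO_nat i 2) he).
have h4a : inO i 4 (t ^+ 4 * em ^+ 2).
  apply: (@inO_mulW i 4 0 4) => //; first exact: inO_t.
  by rewrite expr2; apply: (@inO_mulW i 0 0 0).
have h2e : inO i 0 (2%:R + 2%:R * t ^+ 2 * em + r).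
  apply: inO_add; last exact: (inO_weaken _ hr).
  apply: inO_add; first exact: inO_nat.
  apply: (@inO_mulW i 0 0 0) => //.
  by apply: (@inO_mulW i 0 2 0) => //; [exact: inO_nat | exact: inO_t].
have h4b : inO i 4 (r * (2%:R + 2%:R * t ^+ 2 * em + r)).
  exact: (@inO_mulW i 4 0 4).
have h4c : inO i 4 (t ^+ 4 * (h * eT')).
  apply: (@inO_mulW i 4 0 4) => //; first exact: inO_t.
  exact: (@inO_mulW i 0 0 0).
have h4d : inO i 4 (s * (1 + t ^+ 2 * eT')).
  apply: (@inO_mulW i 4 0 4) => //.
  apply: inO_add; first exact: inO_1.
  by apply: (@inO_mulW i 2 0 0) => //; exact: inO_t.
apply: (@inO_mulW i 4 0 4) => //.
by apply: inO_sub => //; apply: inO_sub => //; apply: inO_add => //; apply: inO_add.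
Qed.

Definition ix : 'I_3 := 0.
Definition iy : 'I_3 := 1.
Definition iz : 'I_3 := 2.
Lemma xFE : xF = toRF 'X_ix. Proof. by []. Qed.
Lemma yFE : yF = toRF 'X_iy. Proof. by []. Qed.
Lemma zFE : zF = toRF 'X_iz. Proof. by []. Qed.

Lemma mpoly_neq0 (p : mpZ3) v : meval v p != 0 -> p != 0.
Proof. by apply: contraNneq => ->; rewrite meval0. Qed.

Definition SF : RF := xF ^+ 2 + yF ^+ 2.
Definition TF : RF := xF ^+ 2 + zF ^+ 2.

Lemma ev_unit_xz : ev iz 'X_ix != 0.
Proof. by rewrite evXj //; apply: (@mpoly_neq0 _ (fun _ => 1)); rewrite mevalXU. Qed.
Lemma ev_unit_yz : ev iz 'X_iy != 0.
Proof. by rewrite evXj //; apply: (@mpoly_neq0 _ (fun _ => 1)); rewrite mevalXU. Qed.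
Lemma ev_unit_xy : ev iy 'X_ix != 0.
Proof. by rewrite evXj //; apply: (@mpoly_neq0 _ (fun _ => 1)); rewrite mevalXU. Qed.
Lemma ev_unit_zy : ev iy 'X_iz != 0.
Proof. by rewrite evXj //; apply: (@mpoly_neq0 _ (fun _ => 1)); rewrite mevalXU. Qed.
Lemma ev_unit_Sz : ev iz ('X_ix ^+ 2 + 'X_iy ^+ 2) != 0.
Proof.
rewrite evD !evX !evXj //; apply: (@mpoly_neq0 _ (fun _ => 1)).
by rewrite mevalD !expr2 !mevalM !mevalXU.
Qed.
Lemma ev_unit_Ty : ev iy ('X_ix ^+ 2 + 'X_iz ^+ 2) != 0.
Proof.
rewrite evD !evX !evXj //; apply: (@mpoly_neq0 _ (fun _ => 1)).
by rewrite mevalD !expr2 !mevalM !mevalXU.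
Qed.

Lemma SFE : SF = toRF ('X_ix ^+ 2 + 'X_iy ^+ 2). Proof. by rewrite toRFD !toRFX. Qed.
Lemma TFE : TF = toRF ('X_ix ^+ 2 + 'X_iz ^+ 2). Proof. by rewrite toRFD !toRFX. Qed.

Lemma uz_x : inO iz 0 xF^-1. Proof. exact: inO_invp ev_unit_xz. Qed.
Lemma uz_y : inO iz 0 yF^-1. Proof. exact: inO_invp ev_unit_yz. Qed.
Lemma uz_S : inO iz 0 SF^-1. Proof. rewrite SFE; exact: inO_invp ev_unit_Sz. Qed.
Lemma uy_x : inO iy 0 xF^-1. Proof. exact: inO_invp ev_unit_xy. Qed.
Lemma uy_z : inO iy 0 zF^-1. Proof. exact: inO_invp ev_unit_zy. Qed.
Lemma uy_T : inO iy 0 TF^-1. Proof. rewrite TFE; exact: inO_invp ev_unit_Ty. Qed.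
Lemma o_x i : inO i 0 xF. Proof. exact: inO_poly. Qed.
Lemma o_y i : inO i 0 yF. Proof. exact: inO_poly. Qed.
Lemma o_z i : inO i 0 zF. Proof. exact: inO_poly. Qed.
Lemma o_S i : inO i 0 SF. Proof. rewrite SFE; exact: inO_poly. Qed.
Lemma o_T i : inO i 0 TF. Proof. rewrite TFE; exact: inO_poly. Qed.

Lemma xF_neq0 : xF != 0. Proof. exact: (toRF_neq0 ev_unit_xz). Qed.
Lemma yF_neq0 : yF != 0. Proof. exact: (toRF_neq0 ev_unit_yz). Qed.
Lemma zF_neq0 : zF != 0. Proof. exact: (toRF_neq0 ev_unit_zy). Qed.
Lemma SF_neq0 : SF != 0. Proof. rewrite SFE; exact: (toRF_neq0 ev_unit_Sz). Qed.
Lemma TF_neq0 : TF != 0. Proof. rewrite TFE; exact: (toRF_neq0 ev_unit_Ty). Qed.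

Lemma inO_expW i k f n m : inO i k f -> (m <= k * n)%N -> inO i m (f ^+ n).
Proof. by move=> h hm; apply: (inO_weaken hm); apply: inO_exp. Qed.

Lemma master_gen_id (F : fieldType) (MA MC Mm MT wA wm wT : F) :
  MT = (MC ^+ 2 + Mm ^+ 2) / MA -> MA != 0 -> wA != 0 -> wT * wA = wm ^+ 2 ->
  MT * wT = ((MC * wm) ^+ 2 + (Mm * wm) ^+ 2) / (MA * wA).
Proof.
move=> -> hA hw hT.
have -> : wT = wm ^+ 2 / wA by rewrite -hT mulfK.
by field; rewrite hA hw.
Qed.

Lemma gen_step i (MA MC Mm MT wA wm wT eA em eT : RF) :
  MT = (MC ^+ 2 + Mm ^+ 2) / MA -> MA != 0 -> wA != 0 -> wT * wA = wm ^+ 2 ->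
  inO i 4 (MA * wA - 1 - toRF 'X_i ^+ 2 * eA) ->
  inO i 4 (Mm * wm - 1 - toRF 'X_i ^+ 2 * em) ->
  inO i 0 eA -> inO i 0 em -> inO i 4 ((MC * wm) ^+ 2) ->
  eT = 2%:R * em - eA ->
  inO i 4 (MT * wT - 1 - toRF 'X_i ^+ 2 * eT).
Proof.
move=> e hA hw hT hsA hsm heA hem hK ->.
have -> : 2%:R * em - eA = 2%:R * em + 0 - eA by rewrite addr0.
apply: (master (master_gen_id e hA hw hT)) => //; last exact: inO_0.
by rewrite mulr0 subr0.
Qed.

Lemma spec_id (F : fieldType) (X t g : F) :
  X ^+ 2 * t ^+ 2 * g ^+ 2 - t ^+ 2 * g ^+ 2 = t ^+ 2 * g ^+ 2 * ((X - 1) * (X + 1)).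
Proof. ring. Qed.

Lemma spec_step i (MC Mm MTw wC wm em g h : RF) :
  MTw = ((MC * wC) ^+ 2 * toRF 'X_i ^+ 2 * g ^+ 2 + (Mm * wm) ^+ 2)
          / (1 + toRF 'X_i ^+ 2 * h) ->
  inO i 2 (MC * wC - 1) ->
  inO i 4 (Mm * wm - 1 - toRF 'X_i ^+ 2 * em) ->
  inO i 0 em -> inO i 0 g -> inO i 0 h ->
  inO i 4 (MTw - 1 - toRF 'X_i ^+ 2 * (2%:R * em + g ^+ 2 - h)).
Proof.
move=> e hC hm hem hg hh.
have hg2 : inO i 0 (g ^+ 2) by apply: (inO_expW hg).
apply: (master e) => //.
- by rewrite (_ : 1 + toRF 'X_i ^+ 2 * h - 1 - toRF 'X_i ^+ 2 * h = 0);
     [exact: inO_0 | ring].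
- rewrite spec_id; apply: (@inO_mulW i 2 2 4) => //.
    by apply: (@inO_mulW i 2 0 2) => //; exact: inO_t.
  apply: (@inO_mulW i 2 0 2) => //.
  rewrite (_ : MC * wC + 1 = (MC * wC - 1) + 2%:R); last by ring.
  by apply: inO_add; [exact: (inO_weaken _ hC) | exact: inO_nat].
Qed.

Definition nn (p q : nat) := (p + q - 1)%N.
Definition wz (p q : nat) : RF :=
  zF ^+ nn p q * xF ^+ (p - 1) * yF ^+ (q - 1) * (SF ^+ nn p q)^-1.
Definition ez (p q : nat) : RF :=
  ((q - 1)%:R * xF ^+ 2 + (p - 1)%:R * yF ^+ 2) / SF ^+ 2.
Definition wy (p q : nat) : RF :=
  yF ^+ (q - 1) * zF ^+ nn p q * (xF ^+ p.+1)^-1 * (TF ^+ (q - 1))^-1.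
Definition fy (p q : nat) : RF :=
  ((nn p q)%:R * xF ^+ 2 + (3 * p - 1)%:R * zF ^+ 2) / TF ^+ 2.

Definition Facts (M : nat -> nat -> RF) (p q : nat) : Prop :=
 [/\ M p q != 0 /\ inO iz 0 (M p q * zF ^+ nn p q),
     inO iy 1 (M p q * yF ^+ q),
     ((0 < p)%N -> (0 < q)%N -> inO iz 4 (M p q * wz p q - 1 - zF ^+ 2 * ez p q)),
     ((0 < q)%N -> inO iy 2 (M p q * wy p q - 1))
   & ((1 < q)%N -> inO iy 4 (M p q * wy p q - 1 - yF ^+ 2 * fy p q))].

Lemma inO_powV i f n : inO i 0 f^-1 -> inO i 0 (f ^+ n)^-1.
Proof. by move=> h; rewrite -exprVn; apply: (inO_expW h). Qed.
Lemma inO_pow i f n : inO i 0 f -> inO i 0 (f ^+ n).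
Proof. by move=> h; apply: (inO_expW h). Qed.

Lemma ez_O p q : inO iz 0 (ez p q).
Proof.
rewrite /ez; apply: (@inO_mulW _ 0 0 0) => //; last by rewrite -exprVn; apply: inO_pow; exact: uz_S.
by apply: inO_add; apply: (@inO_mulW _ 0 0 0) => //; (try exact: inO_nat); apply: inO_pow; [exact: o_x | exact: o_y].
Qed.
Lemma fy_O p q : inO iy 0 (fy p q).
Proof.
rewrite /fy; apply: (@inO_mulW _ 0 0 0) => //; last by rewrite -exprVn; apply: inO_pow; exact: uy_T.
by apply: inO_add; apply: (@inO_mulW _ 0 0 0) => //; (try exact: inO_nat); apply: inO_pow; [exact: o_x | exact: o_z].
Qed.

Lemma SZ_O0 (X e : RF) : inO iz 4 (X - 1 - zF ^+ 2 * e) -> inO iz 0 e -> inO iz 1 (X - 1).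
Proof.
move=> h he; rewrite (_ : X - 1 = (X - 1 - zF ^+ 2 * e) + zF ^+ 2 * e); last by ring.
apply: inO_add; first exact: (inO_weaken _ h).
by apply: (@inO_mulW _ 2 0 1) => //; exact: inO_t.
Qed.

Lemma O1_O0 i (X : RF) : inO i 1 (X - 1) -> inO i 0 X.
Proof.
move=> h; rewrite (_ : X = (X - 1) + 1); last by ring.
by apply: inO_add; [exact: (inO_weaken _ h) | exact: inO_1].
Qed.

Lemma O1_neq0 i (X : RF) : inO i 1 (X - 1) -> X != 0.
Proof.
move=> h; have := (inO_inv1 h).2; by rewrite (_ : 1 + (X - 1) = X) //; ring.
Qed.

Lemma w4_neq0 (F : fieldType) (a b c d : F) i j k l :
  a != 0 -> b != 0 -> c != 0 -> d != 0 ->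
  a ^+ i * b ^+ j * c ^+ k * (d ^+ l)^-1 != 0.
Proof. by move=> *; rewrite !mulf_neq0 ?invr_neq0 ?expf_neq0. Qed.

Lemma w4'_neq0 (F : fieldType) (a b c d : F) i j k l :
  a != 0 -> b != 0 -> c != 0 -> d != 0 ->
  a ^+ i * b ^+ j * (c ^+ k)^-1 * (d ^+ l)^-1 != 0.
Proof. by move=> *; rewrite !mulf_neq0 ?invr_neq0 ?expf_neq0. Qed.

Lemma wz_neq0 p q : wz p q != 0.
Proof.
exact: (w4_neq0 _ _ _ _ zF_neq0 xF_neq0 yF_neq0 SF_neq0).
Qed.
Lemma wy_neq0 p q : wy p q != 0.
Proof.
exact: (w4'_neq0 _ _ _ _ yF_neq0 zF_neq0 xF_neq0 TF_neq0).
Qed.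

Lemma idFZ (F : fieldType) (M z x y S : F) n a b : S != 0 -> x != 0 -> y != 0 ->
  M * z ^+ n = (M * (z ^+ n * x ^+ a * y ^+ b * (S ^+ n)^-1)) * S ^+ n * (x^-1) ^+ a * (y^-1) ^+ b.
Proof.
move=> hS hx hy; rewrite !exprVn; field.
by rewrite !expf_neq0.
Qed.

Lemma idFY (F : fieldType) (M z x y T : F) n a b : T != 0 -> x != 0 -> z != 0 ->
  M * y ^+ b.+1 = (M * (y ^+ b * z ^+ n * (x ^+ a)^-1 * (T ^+ b)^-1)) * y * x ^+ a * T ^+ b * (z^-1) ^+ n.
Proof.
move=> hT hx hz; rewrite !exprVn exprS; field.
by rewrite !expf_neq0.
Qed.

Lemma SZ_FZ (M : RF) p q : inO iz 1 (M * wz p q - 1) -> inO iz 0 (M * zF ^+ nn p q).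
Proof.
move=> h.
have -> : M * zF ^+ nn p q = (M * wz p q) * SF ^+ nn p q * (xF^-1) ^+ (p - 1) * (yF^-1) ^+ (q - 1).
  by rewrite /wz; apply: idFZ; [exact: SF_neq0 | exact: xF_neq0 | exact: yF_neq0].
apply: (@inO_mulW _ 0 0 0) => //; last by apply: inO_pow; exact: uz_y.
apply: (@inO_mulW _ 0 0 0) => //; last by apply: inO_pow; exact: uz_x.
apply: (@inO_mulW _ 0 0 0) => //; last by apply: inO_pow; exact: o_S.
exact: O1_O0.
Qed.

Lemma GY_FY (M : RF) p q : (0 < q)%N -> inO iy 1 (M * wy p q - 1) -> inO iy 1 (M * yF ^+ q).
Proof.
move=> hq h.
have -> : M * yF ^+ q = (M * wy p q) * yF * xF ^+ p.+1 * TF ^+ (q - 1) * (zF^-1) ^+ nn p q.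
  rewrite /wy -{1}(subnK hq) addn1; apply: idFY;
    [exact: TF_neq0 | exact: xF_neq0 | exact: zF_neq0].
apply: (@inO_mulW _ 1 0 1) => //; last by apply: inO_pow; exact: uy_z.
apply: (@inO_mulW _ 1 0 1) => //; last by apply: inO_pow; exact: o_T.
apply: (@inO_mulW _ 1 0 1) => //; last by apply: inO_pow; exact: o_x.
apply: (@inO_mulW _ 0 1 1) => //; first exact: O1_O0.
by rewrite yFE -(expr1 (toRF _)); exact: inO_t.
Qed.

Lemma pw (F : fieldType) (u : F) k l j : (k + l = j * 2)%N -> u ^+ k * u ^+ l = (u ^+ j) ^+ 2.
Proof. by move=> h; rewrite -exprD h exprM. Qed.
Lemma pwV (F : fieldType) (u : F) k l j : (k + l = j * 2)%N ->
  (u ^+ k)^-1 * (u ^+ l)^-1 = ((u ^+ j)^-1) ^+ 2.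
Proof. by move=> h; rewrite -invfM (pw _ h) exprVn. Qed.
Lemma prod4 (F : comRingType) (a1 a2 a3 b1 b2 b3 c1 c2 c3 d1 d2 d3 : F) :
  a1 * a2 = a3 ^+ 2 -> b1 * b2 = b3 ^+ 2 -> c1 * c2 = c3 ^+ 2 -> d1 * d2 = d3 ^+ 2 ->
  (a1 * b1 * c1 * d1) * (a2 * b2 * c2 * d2) = (a3 * b3 * c3 * d3) ^+ 2.
Proof.
move=> ha hb hc hd.
have -> : (a1 * b1 * c1 * d1) * (a2 * b2 * c2 * d2) = (a1 * a2) * (b1 * b2) * (c1 * c2) * (d1 * d2) by ring.
rewrite ha hb hc hd; ring.
Qed.
Lemma natlin (F : comRingType) (u v w : nat) : (u + v = w * 2)%N ->
  (u%:R : F) = 2%:R * w%:R - v%:R.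
Proof.
move=> h; apply/eqP; rewrite eq_sym subr_eq -natrM -natrD mulnC -h //.
Qed.
Lemma lin2 (F : fieldType) (u1 v1 u2 v2 u3 v3 X Y D : F) :
  u1 = 2%:R * u3 - u2 -> v1 = 2%:R * v3 - v2 ->
  (u1 * X + v1 * Y) / D = 2%:R * ((u3 * X + v3 * Y) / D) - (u2 * X + v2 * Y) / D.
Proof. by move=> -> ->; ring. Qed.

Lemma wz_mul a b c d : (0 < a)%N -> (0 < b)%N ->
  wz (a + 2 * c) (b + 2 * d) * wz a b = wz (a + c) (b + d) ^+ 2.
Proof.
move=> ha hb; rewrite /wz; apply: prod4.
- by apply: pw; rewrite /nn; lia.
- by apply: pw; lia.
- by apply: pw; lia.
- by apply: pwV; rewrite /nn; lia.
Qed.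

Lemma wy_mul a b c d : (0 < b)%N ->
  wy (a + 2 * c) (b + 2 * d) * wy a b = wy (a + c) (b + d) ^+ 2.
Proof.
move=> hb; rewrite /wy; apply: prod4.
- by apply: pw; lia.
- by apply: pw; rewrite /nn; lia.
- by apply: pwV; lia.
- by apply: pwV; lia.
Qed.

Lemma ez_lin a b c d : (0 < a)%N -> (0 < b)%N ->
  ez (a + 2 * c) (b + 2 * d) = 2%:R * ez (a + c) (b + d) - ez a b.
Proof. by move=> ha hb; rewrite /ez; apply: lin2; apply: natlin; lia. Qed.

Lemma fy_lin a b c d : (0 < a)%N ->
  fy (a + 2 * c) (b + 2 * d) = 2%:R * fy (a + c) (b + d) - fy a b.
Proof. by move=> h; rewrite /fy; apply: lin2; apply: natlin; rewrite /nn; lia. Qed.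

Lemma stepZ_gen (M : nat -> nat -> RF) a b c d :
  (0 < a)%N -> (0 < b)%N -> (0 < c + d)%N ->
  Facts M a b -> Facts M c d -> Facts M (a + c) (b + d) ->
  M (a + 2 * c)%N (b + 2 * d)%N = (M c d ^+ 2 + M (a + c)%N (b + d)%N ^+ 2) / M a b ->
  inO iz 4 (M (a + 2 * c)%N (b + 2 * d)%N * wz (a + 2 * c) (b + 2 * d) - 1
             - zF ^+ 2 * ez (a + 2 * c) (b + 2 * d)).
Proof.
move=> ha hb hcd [[nzA _] _ szA _ _] [[_ fzC] _ _ _ _] [_ _ szm _ _] e.
have hm1 : (0 < a + c)%N by lia.
have hm2 : (0 < b + d)%N by lia.
apply: (gen_step (i := iz) e nzA (wz_neq0 a b) (wz_mul c d ha hb) (szA ha hb) (szm hm1 hm2)).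
- exact: ez_O.
- exact: ez_O.
- have -> : M c d * wz (a + c) (b + d) =
     (M c d * zF ^+ nn c d) * zF ^+ (a + b) * (xF ^+ (a + c - 1) * yF ^+ (b + d - 1)
        * (SF ^+ nn (a + c) (b + d))^-1).
    rewrite /wz (_ : nn (a + c) (b + d) = nn c d + (a + b))%N; last by rewrite /nn; lia.
    rewrite exprD; ring.
  apply: (@inO_expW _ 2); last by [].
  apply: (@inO_mulW _ 2 0 2) => //; last first.
    apply: (@inO_mulW _ 0 0 0) => //; last by apply: inO_powV; exact: uz_S.
    by apply: (@inO_mulW _ 0 0 0) => //; apply: inO_pow; [exact: o_x | exact: o_y].
  apply: (@inO_mulW _ 0 (a + b) 2) => //; last by lia.
  by rewrite zFE; exact: inO_t.
- exact: ez_lin.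
Qed.

Lemma stepY_gen (M : nat -> nat -> RF) a b c d :
  (0 < a)%N -> (1 < b)%N ->
  Facts M a b -> Facts M c d -> Facts M (a + c) (b + d) ->
  M (a + 2 * c)%N (b + 2 * d)%N = (M c d ^+ 2 + M (a + c)%N (b + d)%N ^+ 2) / M a b ->
  inO iy 4 (M (a + 2 * c)%N (b + 2 * d)%N * wy (a + 2 * c) (b + 2 * d) - 1
             - yF ^+ 2 * fy (a + 2 * c) (b + 2 * d)).
Proof.
move=> ha hb [[nzA _] _ _ _ syA] [_ fyC _ _ _] [_ _ _ _ sym] e.
have hm : (1 < b + d)%N by lia.
have hb0 : (0 < b)%N by lia.
apply: (gen_step (i := iy) e nzA (wy_neq0 a b) (@wy_mul a b c d hb0) (syA hb) (sym hm)).
- exact: fy_O.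
- exact: fy_O.
- have -> : M c d * wy (a + c) (b + d) =
     (M c d * yF ^+ d) * yF ^+ (b - 1) * (zF ^+ nn (a + c) (b + d)
        * (xF ^+ (a + c).+1)^-1 * (TF ^+ (b + d - 1))^-1).
    rewrite /wy (_ : (b + d - 1) = d + (b - 1))%N; last by lia.
    rewrite exprD; ring.
  apply: (@inO_expW _ 2); last by [].
  apply: (@inO_mulW _ 2 0 2) => //; last first.
    apply: (@inO_mulW _ 0 0 0) => //; last by apply: inO_powV; exact: uy_T.
    apply: (@inO_mulW _ 0 0 0) => //; last by apply: inO_powV; exact: uy_x.
    by apply: inO_pow; exact: o_z.
  apply: (@inO_mulW _ 1 (b - 1) 2) => //; last by lia.
  by rewrite yFE; exact: inO_t.
- exact: fy_lin.
Qed.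

Lemma O_y1 : inO iy 1 yF.
Proof. by rewrite yFE -(expr1 (toRF _)); exact: inO_t. Qed.
Lemma O_y2 : inO iy 2 (yF ^+ 2).
Proof. by rewrite yFE; exact: inO_t. Qed.

Lemma facts10 (M : nat -> nat -> RF) : M 1%N 0%N = yF -> Facts M 1 0.
Proof.
move=> e; rewrite /Facts e /nn /= expr0 mulr1; split => //.
- by split; [exact: yF_neq0 | exact: o_y].
- exact: O_y1.
Qed.

Lemma facts01 (M : nat -> nat -> RF) : M 0%N 1%N = xF -> Facts M 0 1.
Proof.
move=> e; rewrite /Facts e /nn /= expr0 mulr1; split => //.
- by split; [exact: xF_neq0 | exact: o_x].
- by rewrite expr1; apply: (@inO_mulW _ 0 1 1) => //; [exact: o_x | exact: O_y1].
- move=> _; rewrite /wy /= !expr0 !mul1r invr1 mulr1 expr1 mulfV; last exact: xF_neq0.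
  by rewrite subrr; exact: inO_0.
Qed.

Lemma id11a (F : fieldType) (x y z : F) : z != 0 -> (x ^+ 2 + y ^+ 2) / z * z ^+ 1 = x ^+ 2 + y ^+ 2.
Proof. by move=> hz; fld. Qed.
Lemma id11b (F : fieldType) (x y z : F) : z != 0 -> x ^+ 2 + y ^+ 2 != 0 ->
  (x ^+ 2 + y ^+ 2) / z * (z ^+ 1 * x ^+ 0 * y ^+ 0 * ((x ^+ 2 + y ^+ 2) ^+ 1)^-1) - 1
    - z ^+ 2 * ((0%:R * x ^+ 2 + 0%:R * y ^+ 2) / (x ^+ 2 + y ^+ 2) ^+ 2) = 0.
Proof. by move=> hz hS; fld. Qed.
Lemma id11c (F : fieldType) (x y z T : F) : z != 0 -> x != 0 -> T != 0 ->
  (x ^+ 2 + y ^+ 2) / z * (y ^+ 0 * z ^+ 1 * (x ^+ 2)^-1 * (T ^+ 0)^-1) - 1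
    = y ^+ 2 * (x ^-1) ^+ 2.
Proof. by move=> hz hx hT; fld. Qed.

Lemma facts11 (M : nat -> nat -> RF) : M 1%N 1%N = SF / zF -> Facts M 1 1.
Proof.
move=> e.
have sz : inO iz 4 (M 1%N 1%N * wz 1 1 - 1 - zF ^+ 2 * ez 1 1).
  rewrite e /wz /ez /nn /SF /= id11b; [exact: inO_0 | exact: zF_neq0 | exact: SF_neq0].
have gy : inO iy 2 (M 1%N 1%N * wy 1 1 - 1).
  rewrite e /wy /nn /SF /= id11c; [|exact: zF_neq0 | exact: xF_neq0 | exact: TF_neq0].
  by apply: (@inO_mulW _ 2 0 2) => //; [exact: O_y2 | apply: inO_pow; exact: uy_x].
have s1 : inO iz 1 (M 1%N 1%N * wz 1 1 - 1) by apply: (SZ_O0 sz); exact: ez_O.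
split => //.
- split; last exact: (SZ_FZ s1).
  by have := O1_neq0 s1; apply: contraNneq => ->; rewrite mul0r.
- by apply: (GY_FY (p := 1)) => //; exact: (inO_weaken _ gy).
Qed.

Lemma id12z (F : fieldType) (x y z : F) : z != 0 -> y != 0 -> x ^+ 2 + y ^+ 2 != 0 ->
  (x ^+ 2 + ((x ^+ 2 + y ^+ 2) / z) ^+ 2) / y * (z ^+ 2 * x ^+ 0 * y ^+ 1 * ((x ^+ 2 + y ^+ 2) ^+ 2)^-1)
   - 1 - z ^+ 2 * ((1%:R * x ^+ 2 + 0%:R * y ^+ 2) / (x ^+ 2 + y ^+ 2) ^+ 2) = 0.
Proof. by move=> *; fld. Qed.
Lemma id12y (F : fieldType) (x y z : F) : z != 0 -> y != 0 -> x != 0 -> x ^+ 2 + z ^+ 2 != 0 ->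
  (x ^+ 2 + ((x ^+ 2 + y ^+ 2) / z) ^+ 2) / y * (y ^+ 1 * z ^+ 2 * (x ^+ 2)^-1 * ((x ^+ 2 + z ^+ 2) ^+ 1)^-1)
   - 1 - y ^+ 2 * ((2%:R * x ^+ 2 + 2%:R * z ^+ 2) / (x ^+ 2 + z ^+ 2) ^+ 2)
  = y ^+ 4 * (x^-1 ^+ 2 * (x ^+ 2 + z ^+ 2)^-1).
Proof. by move=> *; fld. Qed.

Lemma step12 (M : nat -> nat -> RF) :
  M 1%N 0%N = yF -> M 0%N 1%N = xF -> M 1%N 1%N = SF / zF ->
  M 1%N 2%N = (M 0%N 1%N ^+ 2 + M 1%N 1%N ^+ 2) / M 1%N 0%N ->
  inO iz 4 (M 1%N 2%N * wz 1 2 - 1 - zF ^+ 2 * ez 1 2) /\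
  inO iy 4 (M 1%N 2%N * wy 1 2 - 1 - yF ^+ 2 * fy 1 2).
Proof.
move=> e10 e01 e11 e; rewrite e e10 e01 e11; split.
  rewrite /wz /ez /SF id12z; [exact: inO_0 | exact: zF_neq0 | exact: yF_neq0 | exact: SF_neq0].
rewrite /wy /fy /SF id12y; [|exact: zF_neq0 | exact: yF_neq0 | exact: xF_neq0 | exact: TF_neq0].
apply: (@inO_mulW _ 4 0 4) => //; first by rewrite yFE; exact: inO_t.
apply: (@inO_mulW _ 0 0 0) => //; first by apply: inO_pow; exact: uy_x.
exact: uy_T.
Qed.

Lemma S_O2 i (X e : RF) : inO i 4 (X - 1 - toRF 'X_i ^+ 2 * e) -> inO i 0 e -> inO i 2 (X - 1).
Proof.
move=> h he; rewrite (_ : X - 1 = (X - 1 - toRF 'X_i ^+ 2 * e) + toRF 'X_i ^+ 2 * e); last by ring.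
apply: inO_add; first exact: (inO_weaken _ h).
by apply: (@inO_mulW _ 2 0 2) => //; exact: inO_t.
Qed.

Lemma sp0 (F : fieldType) (MT MC Mm X wT wC wm t g : F) :
  MT = (MC ^+ 2 + Mm ^+ 2) / X -> X != 0 -> wT = X * wm ^+ 2 -> wm = wC * (t * g) ->
  MT * wT = ((MC * wC) ^+ 2 * t ^+ 2 * g ^+ 2 + (Mm * wm) ^+ 2) / (1 + t ^+ 2 * 0).
Proof.
move=> -> hX -> ew; rewrite mulr0 addr0 divr1.
rewrite ew; fld.
Qed.

Lemma wzA_gen (F : fieldType) (z x y S : F) k j : S != 0 ->
  z ^+ (k * 2) * x ^+ 1 * y ^+ (j * 2) * (S ^+ (k * 2))^-1 =
  x * (z ^+ k * x ^+ 0 * y ^+ j * (S ^+ k)^-1) ^+ 2.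
Proof. by move=> hS; rewrite !exprM; fld; rewrite expf_neq0. Qed.

Lemma wzB_gen (F : fieldType) (z x y S : F) k j : S != 0 ->
  z ^+ (k + 1) * x ^+ 0 * y ^+ (j + 1) * (S ^+ (k + 1))^-1 =
  (z ^+ k * x ^+ 0 * y ^+ j * (S ^+ k)^-1) * (z * (y / S)).
Proof. by move=> hS; rewrite !exprD; fld; rewrite expf_neq0. Qed.

Lemma ezC_gen (F : fieldType) (x y S : F) d : S != 0 ->
  ((d + d)%:R * x ^+ 2 + 1%:R * y ^+ 2) / S ^+ 2 =
  2%:R * ((d%:R * x ^+ 2 + 0%:R * y ^+ 2) / S ^+ 2) + (y / S) ^+ 2 - 0.
Proof. by move=> hS; rewrite natrD; fld. Qed.

Lemma stepZ_01 (M : nat -> nat -> RF) d : (0 < d)%N ->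
  Facts M 1 d -> Facts M 1 (1 + d) -> M 0%N 1%N = xF ->
  M (0 + 2 * 1)%N (1 + 2 * d)%N = (M 1%N d ^+ 2 + M (0 + 1)%N (1 + d)%N ^+ 2) / M 0%N 1%N ->
  inO iz 4 (M (0 + 2 * 1)%N (1 + 2 * d)%N * wz (0 + 2 * 1) (1 + 2 * d) - 1
             - zF ^+ 2 * ez (0 + 2 * 1) (1 + 2 * d)).
Proof.
move=> hd [_ _ szC _ _] [_ _ szm _ _] e01 e.
rewrite e01 in e.
have hwT : wz (0 + 2 * 1) (1 + 2 * d) = xF * wz 1 (1 + d) ^+ 2.
  rewrite /wz /nn.
  rewrite (_ : (0 + 2 * 1 + (1 + 2 * d) - 1 = (1 + (1 + d) - 1) * 2)%N); last by lia.
  rewrite (_ : (1 + 2 * d - 1 = (1 + d - 1) * 2)%N); last by lia.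
  rewrite (_ : (0 + 2 * 1 - 1 = 1)%N) // (_ : (1 - 1 = 0)%N) //.
  exact: (@wzA_gen _ _ _ _ _ _ _ SF_neq0).
have hwm : wz 1 (1 + d) = wz 1 d * (zF * (yF / SF)).
  rewrite /wz /nn.
  rewrite (_ : (1 + (1 + d) - 1 = (1 + d - 1) + 1)%N); last by lia.
  rewrite (_ : (1 + d - 1 = (d - 1) + 1)%N); last by lia.
  rewrite (_ : (1 - 1 = 0)%N) //.
  exact: (@wzB_gen _ _ _ _ _ _ _ SF_neq0).
have -> : ez (0 + 2 * 1) (1 + 2 * d) = 2%:R * ez 1 (1 + d) + (yF / SF) ^+ 2 - 0.
  rewrite /ez (_ : (1 + 2 * d - 1 = d + d)%N); last by lia.
  rewrite (_ : (1 + d - 1 = d)%N); last by lia.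
  exact: (@ezC_gen _ _ _ _ _ SF_neq0).
apply: (spec_step (i := iz) (sp0 e xF_neq0 hwT hwm) _ (szm isT isT)).
- exact: (S_O2 (i := iz) (szC isT hd) (ez_O _ _)).
- exact: ez_O.
- apply: (@inO_mulW _ 0 0 0) => //; [exact: o_y | exact: uz_S].
- exact: inO_0.
Qed.

Lemma wyA_gen (F : fieldType) (y z x T : F) k n : x != 0 -> T != 0 ->
  y ^+ (k * 2) * z ^+ (n * 2) * (x ^+ 3)^-1 * (T ^+ (k * 2))^-1 =
  x * (y ^+ k * z ^+ n * (x ^+ 2)^-1 * (T ^+ k)^-1) ^+ 2.
Proof. by move=> hx hT; rewrite !exprM; fld. Qed.

Lemma wyB_gen (F : fieldType) (y z x T : F) j n : x != 0 -> T != 0 ->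
  y ^+ (j + 1) * z ^+ (n + 1) * (x ^+ 2)^-1 * (T ^+ (j + 1))^-1 =
  (y ^+ j * z ^+ n * (x ^+ 2)^-1 * (T ^+ j)^-1) * (y * (z / T)).
Proof. by move=> hx hT; rewrite !exprD; fld. Qed.

Lemma fyC_gen (F : fieldType) (x z T : F) n : T != 0 ->
  ((n + n)%:R * x ^+ 2 + 5%:R * z ^+ 2) / T ^+ 2 =
  2%:R * ((n%:R * x ^+ 2 + 2%:R * z ^+ 2) / T ^+ 2) + (z / T) ^+ 2 - 0.
Proof. by move=> hT; rewrite natrD; fld. Qed.

Lemma stepY_01 (M : nat -> nat -> RF) d : (0 < d)%N ->
  Facts M 1 d -> Facts M 1 (1 + d) -> M 0%N 1%N = xF ->
  M (0 + 2 * 1)%N (1 + 2 * d)%N = (M 1%N d ^+ 2 + M (0 + 1)%N (1 + d)%N ^+ 2) / M 0%N 1%N ->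
  inO iy 4 (M (0 + 2 * 1)%N (1 + 2 * d)%N * wy (0 + 2 * 1) (1 + 2 * d) - 1
             - yF ^+ 2 * fy (0 + 2 * 1) (1 + 2 * d)).
Proof.
move=> hd [_ _ _ gyC _] [_ _ _ _ sym] e01 e.
rewrite e01 in e.
have hwT : wy (0 + 2 * 1) (1 + 2 * d) = xF * wy (0 + 1) (1 + d) ^+ 2.
  rewrite /wy /nn.
  rewrite (_ : (0 + 2 * 1 + (1 + 2 * d) - 1 = (0 + 1 + (1 + d) - 1) * 2)%N); last by lia.
  rewrite (_ : (1 + 2 * d - 1 = (1 + d - 1) * 2)%N); last by lia.
  exact: (@wyA_gen _ _ _ _ _ _ _ xF_neq0 TF_neq0).
have hwm : wy (0 + 1) (1 + d) = wy 1 d * (yF * (zF / TF)).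
  rewrite /wy /nn.
  rewrite (_ : (0 + 1 + (1 + d) - 1 = (1 + d - 1) + 1)%N); last by lia.
  rewrite (_ : (1 + d - 1 = (d - 1) + 1)%N); last by lia.
  exact: (@wyB_gen _ _ _ _ _ _ _ xF_neq0 TF_neq0).
have -> : fy (0 + 2 * 1) (1 + 2 * d) = 2%:R * fy (0 + 1) (1 + d) + (zF / TF) ^+ 2 - 0.
  rewrite /fy /nn (_ : (0 + 2 * 1 + (1 + 2 * d) - 1 = (0 + 1 + (1 + d) - 1) + (0 + 1 + (1 + d) - 1))%N); last by lia.
  exact: (@fyC_gen _ _ _ _ _ TF_neq0).
have hq : (1 < 1 + d)%N by lia.
apply: (spec_step (i := iy) (sp0 e xF_neq0 hwT hwm) _ (sym hq)).
- exact: (gyC hd).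
- exact: fy_O.
- apply: (@inO_mulW _ 0 0 0) => //; [exact: o_z | exact: uy_T].
- exact: inO_0.
Qed.

Lemma sp1 (F : fieldType) (MT MC Mm x y z S wT wC wm g : F) :
  MT = (MC ^+ 2 + Mm ^+ 2) / (S / z) -> S = x ^+ 2 + y ^+ 2 ->
  x != 0 -> z != 0 -> S != 0 ->
  wT = wm ^+ 2 * (x ^+ 2 / z) -> wm = wC * (y * g) ->
  MT * wT = ((MC * wC) ^+ 2 * y ^+ 2 * g ^+ 2 + (Mm * wm) ^+ 2) / (1 + y ^+ 2 * (x^-1) ^+ 2).
Proof.
move=> -> eS hx hz hS -> ew.
have hS' : x ^+ 2 + y ^+ 2 != 0 by rewrite -eS.
rewrite ew eS; rewrite eS in hS; fld.
Qed.

Lemma wyT11_gen (F : fieldType) (y z x T : F) c : x != 0 -> T != 0 -> z != 0 ->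
  y ^+ (c * 2 + 2) * z ^+ (c * 4 + 3) * (x ^+ (c * 2 + 2))^-1 * (T ^+ (c * 2 + 2))^-1 =
  (y ^+ (c + 1) * z ^+ (c * 2 + 2) * (x ^+ (c + 2))^-1 * (T ^+ (c + 1))^-1) ^+ 2 * (x ^+ 2 / z).
Proof.
move=> hx hT hz.
rewrite (_ : (c * 4 = (c * 2) * 2)%N); last by rewrite -mulnA.
rewrite !exprD !exprM; fld.
Qed.

Lemma wym11_gen (F : fieldType) (y z x T : F) c : x != 0 -> T != 0 ->
  y ^+ (c + 1) * z ^+ (c * 2 + 2) * (x ^+ (c + 2))^-1 * (T ^+ (c + 1))^-1 =
  (y ^+ c * z ^+ (c * 2) * (x ^+ (c + 1))^-1 * (T ^+ c)^-1) * (y * (z ^+ 2 * (x^-1 * T^-1))).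
Proof.
move=> hx hT.
rewrite !exprD !exprM; fld.
Qed.

Lemma fy11_gen (F : fieldType) (x z T : F) c : x != 0 -> T = x ^+ 2 + z ^+ 2 -> T != 0 ->
  ((c * 4 + 3)%:R * x ^+ 2 + (c * 6 + 2)%:R * z ^+ 2) / T ^+ 2 =
  2%:R * (((c * 2 + 2)%:R * x ^+ 2 + (c * 3 + 2)%:R * z ^+ 2) / T ^+ 2)
   + (z ^+ 2 * (x^-1 * T^-1)) ^+ 2 - (x^-1) ^+ 2.
Proof.
move=> hx eT hT; rewrite !natrD !natrM.
have hT' : x ^+ 2 + z ^+ 2 != 0 by rewrite -eT.
rewrite eT; fld.
Qed.

Lemma stepY_11 (M : nat -> nat -> RF) c :
  Facts M c (c + 1) -> Facts M (1 + c) (1 + (c + 1)) -> M 1%N 1%N = SF / zF ->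
  M (1 + 2 * c)%N (1 + 2 * (c + 1))%N =
    (M c (c + 1)%N ^+ 2 + M (1 + c)%N (1 + (c + 1))%N ^+ 2) / M 1%N 1%N ->
  inO iy 4 (M (1 + 2 * c)%N (1 + 2 * (c + 1))%N * wy (1 + 2 * c) (1 + 2 * (c + 1)) - 1
             - yF ^+ 2 * fy (1 + 2 * c) (1 + 2 * (c + 1))).
Proof.
move=> [_ _ _ gyC _] [_ _ _ _ sym] e11 e.
rewrite e11 in e.
have hwT : wy (1 + 2 * c) (1 + 2 * (c + 1)) = wy (1 + c) (1 + (c + 1)) ^+ 2 * (xF ^+ 2 / zF).
  rewrite /wy /nn.
  rewrite (_ : (1 + 2 * (c + 1) - 1 = c * 2 + 2)%N); last by lia.
  rewrite (_ : (1 + 2 * c + (1 + 2 * (c + 1)) - 1 = c * 4 + 3)%N); last by lia.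
  rewrite (_ : ((1 + 2 * c).+1 = c * 2 + 2)%N); last by lia.
  rewrite (_ : (1 + (c + 1) - 1 = c + 1)%N); last by lia.
  rewrite (_ : (1 + c + (1 + (c + 1)) - 1 = c * 2 + 2)%N); last by lia.
  rewrite (_ : ((1 + c).+1 = c + 2)%N); last by lia.
  exact: (@wyT11_gen _ _ _ _ _ _ xF_neq0 TF_neq0 zF_neq0).
have hwm : wy (1 + c) (1 + (c + 1)) = wy c (c + 1) * (yF * (zF ^+ 2 * (xF^-1 * TF^-1))).
  rewrite /wy /nn.
  rewrite (_ : (1 + (c + 1) - 1 = c + 1)%N); last by lia.
  rewrite (_ : (1 + c + (1 + (c + 1)) - 1 = c * 2 + 2)%N); last by lia.
  rewrite (_ : ((1 + c).+1 = c + 2)%N); last by lia.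
  rewrite (_ : (c + 1 - 1 = c)%N); last by lia.
  rewrite (_ : (c + (c + 1) - 1 = c * 2)%N); last by lia.
  rewrite (_ : (c.+1 = c + 1)%N); last by lia.
  exact: (@wym11_gen _ _ _ _ _ _ xF_neq0 TF_neq0).
have -> : fy (1 + 2 * c) (1 + 2 * (c + 1)) =
    2%:R * fy (1 + c) (1 + (c + 1)) + (zF ^+ 2 * (xF^-1 * TF^-1)) ^+ 2 - (xF^-1) ^+ 2.
  rewrite /fy /nn.
  rewrite (_ : (1 + 2 * c + (1 + 2 * (c + 1)) - 1 = c * 4 + 3)%N); last by lia.
  rewrite (_ : (3 * (1 + 2 * c) - 1 = c * 6 + 2)%N); last by lia.
  rewrite (_ : (1 + c + (1 + (c + 1)) - 1 = c * 2 + 2)%N); last by lia.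
  rewrite (_ : (3 * (1 + c) - 1 = c * 3 + 2)%N); last by lia.
  exact: (@fy11_gen _ _ _ _ _ xF_neq0 erefl TF_neq0).
have hq : (1 < 1 + (c + 1))%N by lia.
have hc : (0 < c + 1)%N by lia.
apply: (spec_step (i := iy) (sp1 e erefl xF_neq0 zF_neq0 SF_neq0 hwT hwm) (gyC hc) (sym hq)).
- exact: fy_O.
- apply: (@inO_mulW _ 0 0 0) => //; first by apply: inO_pow; exact: o_z.
  by apply: (@inO_mulW _ 0 0 0) => //; [exact: uy_x | exact: uy_T].
- by apply: inO_pow; exact: uy_x.
Qed.

Lemma cop_det m n u v : (u * m = v * n + 1)%N -> coprime m n.
Proof.
move=> h.
have h1 : (gcdn m n %| u * m)%N := dvdn_mull u (dvdn_gcdl m n).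
have h2 : (gcdn m n %| v * n)%N := dvdn_mull v (dvdn_gcdr m n).
rewrite /coprime -dvdn1 (_ : 1%N = u * m - v * n)%N; last by lia.
exact: dvdn_sub.
Qed.

Lemma decomp_core p q : coprime p q -> (1 <= p <= q)%N -> (2 <= q)%N ->
  exists c d, [/\ (1 <= d)%N, (2 * d <= q)%N, (2 * c <= p)%N &
     ((p * d = q * c + 1)%N \/ (q * c = p * d + 1)%N)].
Proof.
move=> cop /andP[hp hpq] hq.
have q0 : (0 < q)%N by lia.
case: (Bezoutl p q0) => d1 hd1 hdv.
rewrite gcdnC (eqP cop) in hdv.
case/dvdnP: hdv => c1 ec1.
(* 1 + d1 * p = c1 * q *)
have d1pos : (1 <= d1)%N.
  case: (posnP d1) => [e0|//]; move: ec1; rewrite e0 mul0n addn0 => ec1.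
  move: ec1 hq; clear; move=> ec1 hq.
  case: c1 ec1 => [|c1'] ec1; nia.
case: (leqP q (2 * d1)) => hle.
- have hc1 : (c1 <= p)%N.
    have : (c1 * q <= p * q)%N by rewrite -ec1; nia.
    by rewrite leq_pmul2r.
  exists (p - c1)%N, (q - d1)%N; split; try lia.
  + have : (2 * (p - c1) * q <= p * q)%N.
      have e2 : ((p - c1) * q = p * q - c1 * q)%N by rewrite mulnBl.
      rewrite -mulnA e2; nia.
    by rewrite leq_pmul2r //.
  + left; rewrite !mulnBr; nia.
- exists c1, d1; split.
  + lia.
  + lia.
  + have : (2 * c1 * q < (p + 1) * q)%N by nia.
    by rewrite ltn_pmul2r // addn1 ltnS.
  + right; nia.
Qed.

Lemma coprime0_eq a : coprime a 0 -> a = 1%N.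
Proof. by rewrite /coprime gcdn0 => /eqP. Qed.

Lemma decomp p q : in_index p q -> (1 <= p)%N -> (2 <= q)%N ->
  exists a b c d, [/\ in_index a b, in_index c d, farey_nb a b c d,
    (a + 2 * c <= b + 2 * d)%N &
    [/\ p = (a + 2 * c)%N, q = (b + 2 * d)%N, in_index (a + c) (b + d) & (1 <= d)%N]].
Proof.
move=> /andP[cop hle] hp hq.
have hpq : (p <= q)%N by case/orP: hle => // /eqP h; rewrite h in hq.
have [c [d [hd hdq hcp hdet]]] := decomp_core cop (introT andP (conj hp hpq)) hq.
have [a ea] : exists a, p = (a + 2 * c)%N by exists (p - 2 * c)%N; lia.
have [b eb] : exists b, q = (b + 2 * d)%N by exists (q - 2 * d)%N; lia.
subst p q.
have hdet' : (a * d = b * c + 1 \/ b * c = a * d + 1)%N by case: hdet => h; [left|right]; nia.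
have hcd : (c <= d)%N by case: hdet => h; nia.
have copcd : coprime c d.
  by case: hdet => h; [rewrite coprime_sym; apply: (@cop_det _ _ (a + 2 * c) (b + 2 * d))
                      | apply: (@cop_det _ _ (b + 2 * d) (a + 2 * c))]; lia.
have copab : coprime a b.
  by case: hdet' => h; [apply: (@cop_det _ _ d c) | rewrite coprime_sym; apply: (@cop_det _ _ c d)]; lia.
have copm : coprime (a + c) (b + d).
  by case: hdet' => h; [apply: (@cop_det _ _ d c) | rewrite coprime_sym; apply: (@cop_det _ _ c d)]; nia.
have hab : (a <= b)%N || (b == 0)%N.
  case: (posnP b) => [-> | bpos]; first by rewrite orbT.
  apply/orP; left; case: hdet' => h; nia.
exists a, b, c, d; split => //.
- by rewrite /in_index copab hab.
- by rewrite /in_index copcd hcd.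
- by rewrite /farey_nb; case: hdet' => ->; rewrite eqxx ?orbT.
- split => //; rewrite /in_index copm /=; apply/orP; left.
  case/orP: hab => [|/eqP b0]; first lia.
  subst b; move: copab; rewrite /coprime gcdn0 => /eqP a1; subst a; lia.
Qed.

Lemma facts_of_S (M : nat -> nat -> RF) p q : (1 <= p)%N -> (2 <= q)%N ->
  inO iz 4 (M p q * wz p q - 1 - zF ^+ 2 * ez p q) ->
  inO iy 4 (M p q * wy p q - 1 - yF ^+ 2 * fy p q) -> Facts M p q.
Proof.
move=> hp hq sz sy.
have s1 : inO iz 1 (M p q * wz p q - 1) by apply: (SZ_O0 sz); exact: ez_O.
have gy : inO iy 2 (M p q * wy p q - 1) by apply: (S_O2 (i := iy) sy); exact: fy_O.
split => //.
- split; last exact: (SZ_FZ s1).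
  by have := O1_neq0 s1; apply: contraNneq => ->; rewrite mul0r.
- by apply: (GY_FY (p := p)); [lia | exact: (inO_weaken _ gy)].
Qed.

Lemma coprime0n_eq b : coprime 0 b -> b = 1%N.
Proof. by rewrite /coprime gcd0n => /eqP. Qed.

Lemma all_facts (M : nat -> nat -> RF) : is_markov_family M ->
  forall p q, in_index p q -> Facts M p q.
Proof.
case=> e10 e01 e11 hrec.
have e11' : M 1%N 1%N = SF / zF by rewrite e11.
suff H : forall N q p, (q <= N)%N -> in_index p q -> Facts M p q.
  by move=> p q; apply: (H q).
elim=> [|N IH] q p hqN hin.
- have q0 : q = 0%N by lia.
  subst q; move: hin => /andP[cop _]; rewrite (coprime0_eq cop).
  exact: facts10.
case: (leqP q 1) => hq1.
- move: hin => /andP[cop hle].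
  case: q hq1 hqN cop hle => [|[|//]] _ _ cop hle.
  + by rewrite (coprime0_eq cop); exact: facts10.
  + case: p cop hle => [|[|//]] _ _; first exact: facts01.
    exact: facts11.
have hp : (1 <= p)%N.
  case: (posnP p) => [p0|//]; move: hin; rewrite p0 => /andP[cop _].
  by move: (coprime0n_eq cop) hq1 => ->.
have [a [b [c [d [inab incd far hle [ep eq inm hd]]]]]] := decomp hin hp hq1.
have fA : Facts M a b by apply: (IH b a) => //; lia.
have fC : Facts M c d by apply: (IH d c) => //; lia.
have fm : Facts M (a + c) (b + d) by apply: (IH (b + d)%N (a + c)%N) => //; lia.
have er := hrec a b c d inab incd far hle.
subst p q.
move: inab => /andP[copab hab].
apply: facts_of_S => //.
-
  case: (posnP a) => [a0|apos].
    subst a; have b1 := coprime0n_eq copab; subst b.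
    have c1 : c = 1%N by move: far; rewrite /farey_nb; lia.
    subst c; exact: (stepZ_01 hd fC fm e01 er).
  case: (posnP b) => [b0|bpos].
    subst b; have a1 := coprime0_eq copab; subst a.
    have d1 : d = 1%N by move: far; rewrite /farey_nb; lia.
    have c0 : c = 0%N by lia.
    subst c d.
    by have [h _] := step12 e10 e01 e11' er.
  apply: (stepZ_gen apos bpos _ fA fC fm er); lia.
-
  case: (posnP a) => [a0|apos].
    subst a; have b1 := coprime0n_eq copab; subst b.
    have c1 : c = 1%N by move: far; rewrite /farey_nb; lia.
    subst c; exact: (stepY_01 hd fC fm e01 er).
  case: (posnP b) => [b0|bpos].
    subst b; have a1 := coprime0_eq copab; subst a.
    have d1 : d = 1%N by move: far; rewrite /farey_nb; lia.
    have c0 : c = 0%N by lia.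
    subst c d.
    by have [_ h] := step12 e10 e01 e11' er.
  case: (leqP b 1) => hb1.
    have b1 : b = 1%N by lia.
    subst b.
    have a1 : a = 1%N by move: hab; case/orP; lia.
    subst a.
    have dc : d = (c + 1)%N by move: far hle; rewrite /farey_nb; lia.
    subst d; exact: (stepY_11 fC fm e11' er).
  exact: (stepY_gen apos hb1 fA fC fm er).
Qed.

Lemma addm_eq (k u m : 'X_{1..3}) : ((k + u)%MM == m) = (u <= m)%MM && (k == (m - u)%MM).
Proof.
apply/eqP/andP => [<-|[hu /eqP ->]]; last by rewrite submK.
by split; [exact: lem_addl | rewrite addmK].
Qed.

Lemma mcoeffMX_gen (p : mpZ3) u m :
  (p * 'X_[u])@_m = if (u <= m)%MM then p@_(m - u) else 0.
Proof.
elim/mpolyind: p => [|c k p _ _ IH].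
  by rewrite mul0r mcoeff0; case: ifP => //; rewrite mcoeff0.
rewrite mulrDl mcoeffD IH -scalerAl -mpolyXD mcoeffZ mcoeffX addm_eq.
case: ifP => hu /=; last by rewrite mulr0 add0r.
by rewrite mcoeffD mcoeffZ mcoeffX.
Qed.

Lemma mcoeffXM_gen (p : mpZ3) u m :
  ('X_[u] * p)@_m = if (u <= m)%MM then p@_(m - u) else 0.
Proof. by rewrite mulrC mcoeffMX_gen. Qed.

Lemma ev_mono i (m : 'X_{1..3}) :
  ev i 'X_[m] = if (m i == 0)%N then 'X_[m] else 0.
Proof.
rewrite /ev comp_mpolyX.
case: eqP => hm.
  rewrite [RHS]mpolyXE_id; apply: eq_bigr => j _.
  rewrite tnth_mktuple; case: eqP => [->|//].
  by rewrite hm !expr0.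
rewrite (bigD1 i) //= tnth_mktuple eqxx expr0n.
by move/eqP/negbTE: hm => ->; rewrite mul0r.
Qed.

Lemma X_split i (m : 'X_{1..3}) : (0 < m i)%N -> 'X_[m] = 'X_i * 'X_[m - U_(i)] :> mpZ3.
Proof.
move=> h; rewrite -mpolyXD addmC submK //.
by apply/mnm_lepP => j; rewrite mnm1E; case: eqP => [<-|_].
Qed.

Lemma ev_decomp i (h : mpZ3) : exists h', h = ev i h + 'X_i * h'.
Proof.
elim/mpolyind: h => [|c m p _ _ [p' IH]].
  by exists 0; rewrite /ev raddf0 mulr0 addr0.
have [e0|epos] := posnP (m i).
  exists p'; rewrite /ev raddfD /= -/(ev i p) linearZ /= -/(ev i 'X_[m]) ev_mono e0 eqxx.
  by rewrite {1}IH addrA.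
exists (c *: 'X_[m - U_(i)] + p').
rewrite /ev raddfD /= -/(ev i p) linearZ /= -/(ev i 'X_[m]) ev_mono.
rewrite (negbTE (lt0n_neq0 epos)) scaler0 add0r {1}IH {1}(X_split epos).
rewrite mulrDr -scalerAr; ring.
Qed.

Lemma mcoeff_Xi i (h : mpZ3) (m : 'X_{1..3}) :
  ('X_i * h)@_m = if (0 < m i)%N then h@_(m - U_(i)) else 0.
Proof.
rewrite mcoeffXM_gen.
have -> : (U_(i) <= m)%MM = (0 < m i)%N.
  apply/mnm_lepP/idP => [/(_ i)|h0 j]; first by rewrite mnm1E eqxx.
  by rewrite mnm1E; case: eqP => [<-|_].
by [].
Qed.

Lemma ev_eq0_coeff i (h : mpZ3) (m : 'X_{1..3}) : (m i == 0)%N -> ev i h = 0 -> h@_m = 0.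
Proof.
move=> hm e; have [h' eh] := ev_decomp i h.
by rewrite eh e add0r mcoeff_Xi; move/eqP: hm => ->.
Qed.

Lemma Xi_neq0 i : ('X_i : mpZ3) != 0.
Proof. by apply: (@mpoly_neq0 _ (fun _ => 1)); rewrite mevalXU. Qed.

Lemma zero_low i k (h q p : mpZ3) :
  ev i q != 0 -> h * q = 'X_i ^+ k * p -> forall m : 'X_{1..3}, (m i < k)%N -> h@_m = 0.
Proof.
elim: k h p => [//|k IH] h p hq e m hm.
have evh : ev i h = 0.
  have : ev i h * ev i q = 0 by rewrite -evM e evM evX evXi expr0n mul0r.
  by move/eqP; rewrite mulf_eq0 (negbTE hq) orbF => /eqP.
have [h' eh] := ev_decomp i h.
rewrite evh add0r in eh.
have e' : h' * q = 'X_i ^+ k * p.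
  apply: (mulfI (Xi_neq0 i)); rewrite mulrA -eh e exprS; ring.
rewrite eh mcoeff_Xi; case: ifP => // hpos.
apply: (IH h' p hq e') => //.
by rewrite mnmBE mnm1E eqxx; lia.
Qed.

Definition sqt : 3.-tuple mpZ3 :=
  [tuple ('X_0 : mpZ3) ^+ 2; ('X_1 : mpZ3) ^+ 2; ('X_2 : mpZ3) ^+ 2].

Lemma sq_substE P : sq_subst P = toRF (P \mPo sqt). Proof. by []. Qed.

Lemma tnth_sqt (i : 'I_3) : tnth sqt i = 'X_i ^+ 2.
Proof. by case: i => [[|[|[|//]]] hi] //=; congr ('X__ ^+ 2); apply: val_inj. Qed.

Lemma sq_mono (k : 'X_{1..3}) : 'X_[k] \mPo sqt = 'X_[(k + k)%MM].
Proof.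
rewrite comp_mpolyX [RHS]mpolyXE_id; apply: eq_bigr => i _.
by rewrite tnth_sqt -exprM mnmDE mul2n -addnn.
Qed.

Lemma dbl_inj (k m : 'X_{1..3}) : ((k + k)%MM == (m + m)%MM) = (k == m).
Proof.
apply/eqP/eqP => [h|->//]; apply/mnmP => i.
by have := congr1 (fun t : 'X_{1..3} => t i) h; rewrite /= !mnmDE; lia.
Qed.

Lemma sq_coeff (Q : mpZ3) m : (Q \mPo sqt)@_(m + m)%MM = Q@_m.
Proof.
elim/mpolyind: Q => [|c k p _ _ IH]; first by rewrite raddf0 !mcoeff0.
rewrite raddfD /= mcoeffD IH comp_mpolyZ sq_mono !mcoeffD !mcoeffZ !mcoeffX.
by rewrite dbl_inj.
Qed.

Definition mk3 (i j k : nat) : 'X_{1..3} := [multinom [tuple i; j; k]].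

Lemma mk3E0 i j k : mk3 i j k ix = i. Proof. by rewrite /mk3 multinomE. Qed.
Lemma mk3E1 i j k : mk3 i j k iy = j. Proof. by rewrite /mk3 multinomE. Qed.
Lemma mk3E2 i j k : mk3 i j k iz = k. Proof. by rewrite /mk3 multinomE. Qed.

Lemma mk3P (m : 'X_{1..3}) i j k : m ix = i -> m iy = j -> m iz = k -> m = mk3 i j k.
Proof.
move=> h0 h1 h2; apply/mnmP => t; rewrite /mk3 multinomE.
case: t => [[|[|[|//]]] ht].
- by rewrite (tnth_nth 0%N) /= -h0; congr (m _); apply: val_inj.
- by rewrite (tnth_nth 0%N) /= -h1; congr (m _); apply: val_inj.
- by rewrite (tnth_nth 0%N) /= -h2; congr (m _); apply: val_inj.
Qed.

Lemma mk3_dbl i j k : (mk3 i j k + mk3 i j k)%MM = mk3 (i + i) (j + j) (k + k).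
Proof. by apply: mk3P; rewrite mnmDE ?mk3E0 ?mk3E1 ?mk3E2. Qed.

Lemma mk3_eq0 i j k : (mk3 i j k == 0%MM) = [&& i == 0, j == 0 & k == 0]%N.
Proof.
apply/eqP/and3P => [h|[/eqP -> /eqP -> /eqP ->]]; last by apply/esym/mk3P; rewrite mnm0E.
have := congr1 (fun t : 'X_{1..3} => t ix) h; have := congr1 (fun t : 'X_{1..3} => t iy) h.
have := congr1 (fun t : 'X_{1..3} => t iz) h.
by rewrite /= mk3E0 mk3E1 mk3E2 !mnm0E => -> -> ->.
Qed.

Lemma mulX0 (p : mpZ3) i j k :
  ('X_ix * p)@_(mk3 i j k) = if i is i'.+1 then p@_(mk3 i' j k) else 0.
Proof.
rewrite mcoeff_Xi mk3E0; case: i => [//|i] /=; congr (p@__).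
by apply: mk3P; rewrite mnmBE mnm1E ?mk3E0 ?mk3E1 ?mk3E2 //=; lia.
Qed.
Lemma mulX1 (p : mpZ3) i j k :
  ('X_iy * p)@_(mk3 i j k) = if j is j'.+1 then p@_(mk3 i j' k) else 0.
Proof.
rewrite mcoeff_Xi mk3E1; case: j => [//|j] /=; congr (p@__).
by apply: mk3P; rewrite mnmBE mnm1E ?mk3E0 ?mk3E1 ?mk3E2 //=; lia.
Qed.
Lemma mulX2 (p : mpZ3) i j k :
  ('X_iz * p)@_(mk3 i j k) = if k is k'.+1 then p@_(mk3 i j k') else 0.
Proof.
rewrite mcoeff_Xi mk3E2; case: k => [//|k] /=; congr (p@__).
by apply: mk3P; rewrite mnmBE mnm1E ?mk3E0 ?mk3E1 ?mk3E2 //=; lia.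
Qed.

Lemma mcoeff1_mk3 i j k : (1 : mpZ3)@_(mk3 i j k) = ([&& i == 0, j == 0 & k == 0]%N)%:R.
Proof. by rewrite mcoeff1 mk3_eq0. Qed.

Lemma bin01 N i j k : (('X_ix + 'X_iy : mpZ3) ^+ N)@_(mk3 i j k) =
  if ((k == 0) && (i + j == N))%N then ('C(N, i))%:R else 0.
Proof.
elim: N i j k => [|N IH] i j k.
  rewrite expr0 mcoeff1_mk3.
  by case: i => [|i]; case: j => [|j]; case: k => [|k].
rewrite exprS mulrDl mcoeffD mulX0 mulX1.
case: i => [|i]; case: j => [|j].
- by rewrite add0r; case: (k == 0%N).
- rewrite IH add0r; case: (k == 0%N) => //=.
  by rewrite add0n eqSS !bin0.
- rewrite IH addr0; case: (k == 0%N) => //=.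
  rewrite !addn0 eqSS; case: eqP => // ->; by rewrite !binn.
- rewrite !IH; case: (k == 0%N) => /=; last by rewrite addr0.
  rewrite !addSn !addnS eqSS.
  case: ifP => _; last by rewrite addr0.
  by rewrite binS natrD addrC.
Qed.

Lemma bin02 N i j k : (('X_ix + 'X_iz : mpZ3) ^+ N)@_(mk3 i j k) =
  if ((j == 0) && (i + k == N))%N then ('C(N, i))%:R else 0.
Proof.
elim: N i j k => [|N IH] i j k.
  rewrite expr0 mcoeff1_mk3.
  by case: i => [|i]; case: j => [|j]; case: k => [|k].
rewrite exprS mulrDl mcoeffD mulX0 mulX2.
case: i => [|i]; case: k => [|k].
- by rewrite add0r; case: (j == 0%N).
- rewrite IH add0r; case: (j == 0%N) => //=.
  by rewrite add0n eqSS !bin0.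
- rewrite IH addr0; case: (j == 0%N) => //=.
  rewrite !addn0 eqSS; case: eqP => // ->; by rewrite !binn.
- rewrite !IH; case: (j == 0%N) => /=; last by rewrite addr0.
  rewrite !addSn !addnS eqSS.
  case: ifP => _; last by rewrite addr0.
  by rewrite binS natrD addrC.
Qed.

Lemma powX0 a (p : mpZ3) i j k :
  ('X_ix ^+ a * p)@_(mk3 i j k) = if (a <= i)%N then p@_(mk3 (i - a) j k) else 0.
Proof.
elim: a i => [|a IH] i; first by rewrite expr0 mul1r subn0.
rewrite exprS -mulrA mulX0; case: i => [//|i].
by rewrite IH ltnS subSS.
Qed.

Definition Gz (a b : nat) : mpZ3 :=
  ('X_ix + 'X_iy) ^+ (a + b - 1) +
  'X_iz * (('X_ix + 'X_iy) ^+ (a + b - 3) * ('X_ix *+ (b - 1) + 'X_iy *+ (a - 1))).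

Lemma sqmD p q : sq_subst (p + q) = sq_subst p + sq_subst q.
Proof. by rewrite /sq_subst rmorphD toRFD. Qed.
Lemma sqmM p q : sq_subst (p * q) = sq_subst p * sq_subst q.
Proof. by rewrite /sq_subst rmorphM toRFM. Qed.
Lemma sqmX p k : sq_subst (p ^+ k) = sq_subst p ^+ k.
Proof. by rewrite /sq_subst rmorphXn toRFX. Qed.
Lemma sqmMn p k : sq_subst (p *+ k) = sq_subst p * k%:R.
Proof. by rewrite /sq_subst rmorphMn /toRF rmorphMn mulr_natr. Qed.
Lemma sqX0 : sq_subst 'X_ix = xF ^+ 2.
Proof. by rewrite /sq_subst comp_mpolyXU /= toRFX. Qed.
Lemma sqX1 : sq_subst 'X_iy = yF ^+ 2.
Proof. by rewrite /sq_subst comp_mpolyXU /= toRFX. Qed.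
Lemma sqX2 : sq_subst 'X_iz = zF ^+ 2.
Proof. by rewrite /sq_subst comp_mpolyXU /= toRFX. Qed.

Lemma sqGz a b : sq_subst (Gz a b) =
  SF ^+ (a + b - 1) + zF ^+ 2 * (SF ^+ (a + b - 3) * (xF ^+ 2 * (b - 1)%:R + yF ^+ 2 * (a - 1)%:R)).
Proof.
rewrite /Gz !(sqmD, sqmM, sqmX, sqmMn) sqX0 sqX1 sqX2.
by [].
Qed.

Definition Gy (a b : nat) : mpZ3 :=
  'X_ix ^+ a * ('X_ix + 'X_iz) ^+ (b - 1) +
  'X_iy * ('X_ix ^+ a * ('X_ix + 'X_iz) ^+ (b - 3) *
           ('X_ix *+ (a + b - 1) + 'X_iz *+ (3 * a - 1))).

Lemma sqGy a b : sq_subst (Gy a b) =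
  (xF ^+ 2) ^+ a * TF ^+ (b - 1) + yF ^+ 2 * ((xF ^+ 2) ^+ a * TF ^+ (b - 3) *
     (xF ^+ 2 * (a + b - 1)%:R + zF ^+ 2 * (3 * a - 1)%:R)).
Proof.
rewrite /Gy !(sqmD, sqmM, sqmX, sqmMn) sqX0 sqX1 sqX2.
by [].
Qed.

Lemma extract i (P G : mpZ3) k0 :
  inO i k0 (toRF (P \mPo sqt) - toRF (G \mPo sqt)) ->
  forall m : 'X_{1..3}, (m i + m i < k0)%N -> P@_m = G@_m.
Proof.
move=> [p [q [hq e]]] m hm.
rewrite -toRFB -toRFM in e; have e' := toRF_inj e.
have := zero_low hq e' (m := (m + m)%MM); rewrite mnmDE => /(_ hm).
by rewrite mcoeffB !sq_coeff => /eqP; rewrite subr_eq0 => /eqP.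
Qed.

Lemma idZ (F : fieldType) (M x y z sP be al : F) A B N :
  x != 0 -> y != 0 -> z != 0 -> x ^+ 2 + y ^+ 2 != 0 ->
  M = sP / (x ^+ A * y ^+ B * z ^+ (N + 2)) ->
  sP - ((x ^+ 2 + y ^+ 2) ^+ (N + 2) + z ^+ 2 * ((x ^+ 2 + y ^+ 2) ^+ N * (x ^+ 2 * be + y ^+ 2 * al)))
  = (M * (z ^+ (N + 2) * x ^+ A * y ^+ B * ((x ^+ 2 + y ^+ 2) ^+ (N + 2))^-1) - 1
      - z ^+ 2 * ((be * x ^+ 2 + al * y ^+ 2) / (x ^+ 2 + y ^+ 2) ^+ 2)) * (x ^+ 2 + y ^+ 2) ^+ (N + 2).
Proof. by move=> hx hy hz hS ->; rewrite !exprD; fld. Qed.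

Lemma idY (F : fieldType) (M x y z sP g ga : F) a A B n : a = (A + 1)%N ->
  x != 0 -> y != 0 -> z != 0 -> x ^+ 2 + z ^+ 2 != 0 ->
  M = sP / (x ^+ A * y ^+ (B + 2) * z ^+ n) ->
  sP - ((x ^+ 2) ^+ a * (x ^+ 2 + z ^+ 2) ^+ (B + 2) + y ^+ 2 * ((x ^+ 2) ^+ a *
      (x ^+ 2 + z ^+ 2) ^+ B * (x ^+ 2 * g + z ^+ 2 * ga)))
  = (M * (y ^+ (B + 2) * z ^+ n * (x ^+ a.+1)^-1 * ((x ^+ 2 + z ^+ 2) ^+ (B + 2))^-1) - 1
      - y ^+ 2 * ((g * x ^+ 2 + ga * z ^+ 2) / (x ^+ 2 + z ^+ 2) ^+ 2))
    * ((x ^+ 2) ^+ a * (x ^+ 2 + z ^+ 2) ^+ (B + 2)).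
Proof.
move=> -> hx hy hz hT ->.
rewrite -exprM (_ : (2 * (A + 1) = A + (A + 1).+1)%N); last by lia.
rewrite !exprD; fld.
Qed.

Lemma coefZZ (M : nat -> nat -> RF) a b P : (1 <= a)%N -> (2 <= b)%N ->
  M a b = sq_subst P / (xF ^+ (a - 1) * yF ^+ (b - 1) * zF ^+ (a + b - 1)) ->
  inO iz 4 (M a b * wz a b - 1 - zF ^+ 2 * ez a b) ->
  forall m : 'X_{1..3}, (m iz <= 1)%N -> P@_m = (Gz a b)@_m.
Proof.
move=> ha hb hM sz m hm.
apply: (extract (i := iz) (k0 := 4)); last by lia.
have en : (a + b - 1 = (a + b - 3) + 2)%N by lia.
rewrite -!sq_substE sqGz en; rewrite en in hM.
move: sz; rewrite /wz /ez /nn en => sz.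
rewrite /SF (@idZ RF (M a b) xF yF zF (sq_subst P) ((b - 1)%:R) ((a - 1)%:R) (a - 1) (b - 1) (a + b - 3)
   xF_neq0 yF_neq0 zF_neq0 SF_neq0 hM).
apply: (@inO_mulW _ 4 0 4) => //.
by apply: inO_pow; exact: o_S.
Qed.

Lemma coefYY (M : nat -> nat -> RF) a b P : (1 <= a)%N -> (3 <= b)%N ->
  M a b = sq_subst P / (xF ^+ (a - 1) * yF ^+ (b - 1) * zF ^+ (a + b - 1)) ->
  inO iy 4 (M a b * wy a b - 1 - yF ^+ 2 * fy a b) ->
  forall m : 'X_{1..3}, (m iy <= 1)%N -> P@_m = (Gy a b)@_m.
Proof.
move=> ha hb hM sy m hm.
apply: (extract (i := iy) (k0 := 4)); last by lia.
have eb : (b - 1 = (b - 3) + 2)%N by lia.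
have ea : a = ((a - 1) + 1)%N by lia.
rewrite -!sq_substE sqGy eb; rewrite eb in hM.
move: sy; rewrite /wy /fy /nn eb => sy.
rewrite /TF (@idY RF (M a b) xF yF zF (sq_subst P) ((a + b - 1)%:R) ((3 * a - 1)%:R) a (a - 1) (b - 3) (a + b - 1)
   ea xF_neq0 yF_neq0 zF_neq0 TF_neq0 hM).
apply: (@inO_mulW _ 4 0 4) => //.
by apply: (@inO_mulW _ 0 0 0) => //; apply: inO_pow; [apply: inO_pow; exact: o_x | exact: o_T].
Qed.

Local Open Scope nat_scope.

Lemma amgm (u v X : nat) : (u + v = 2 * X)%N -> (u * v <= X ^ 2)%N.
Proof.
wlog huv : u v / (u <= v)%N.
  move=> H h; case: (leqP u v) => c; first exact: H.
  by rewrite mulnC; apply: H; lia.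
move=> h.
have ev : v = (u + 2 * (X - u))%N by lia.
have eX : X = (u + (X - u))%N by lia.
rewrite ev {2}eX; set t := (X - u)%N.
rewrite expnS expn1; nia.
Qed.

Definition lc (N al be K : nat) : nat :=
  (if K is K'.+1 then be * 'C(N, K') else 0) + al * 'C(N, K).

Definition lcp (N al be K : nat) : nat := if K is K'.+1 then lc N al be K' else 0.

Lemma lc_id N al be K :
  (N.+1 * lc N al be K = 'C(N.+1, K) * (be * K + al * (N.+1 - K)))%N.
Proof.
rewrite /lc mulnDr.
have h2 : (N.+1 * 'C(N, K) = (N.+1 - K) * 'C(N.+1, K))%N by rewrite -mul_bin_down.
case: K h2 => [|K] h2.
  by rewrite /= !bin0; lia.
have h1 : (N.+1 * 'C(N, K) = K.+1 * 'C(N.+1, K.+1))%N by rewrite -mul_bin_diag.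
rewrite /= mulnDr !(mulnCA N.+1) h1 h2; nia.
Qed.

Lemma bin_lc M K : (1 <= K)%N -> (K < M)%N ->
  ('C(M, K.-1) * 'C(M, K.+1) < 'C(M, K) ^ 2)%N.
Proof.
move=> h1 h2.
have hB : (0 < 'C(M, K))%N by rewrite bin_gt0; lia.
have e1 : ('C(M, K.-1) * (M - K.-1) = 'C(M, K) * K)%N.
  case: K h1 h2 hB => [//|K] _ h2 hB /=.
  by rewrite [LHS]mulnC -mul_bin_left mulnC.
have e2 : ('C(M, K.+1) * K.+1 = 'C(M, K) * (M - K))%N.
  by rewrite mulnC mul_bin_left mulnC.
have : ('C(M, K.-1) * 'C(M, K.+1) * ((M - K.-1) * K.+1) < 'C(M, K) ^ 2 * ((M - K.-1) * K.+1))%N.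
  rewrite (_ : 'C(M, K.-1) * 'C(M, K.+1) * ((M - K.-1) * K.+1) =
               ('C(M, K.-1) * (M - K.-1)) * ('C(M, K.+1) * K.+1))%N; last by lia.
  rewrite e1 e2.
  rewrite (_ : 'C(M, K) * K * ('C(M, K) * (M - K)) = 'C(M, K) ^ 2 * (K * (M - K)))%N; last by lia.
  rewrite ltn_pmul2l; last by rewrite expn_gt0 hB.
  nia.
rewrite ltn_pmul2r //; nia.
Qed.

Lemma lc_logconc N al be K : (0 < lc N al be K)%N ->
  (lcp N al be K * lc N al be K.+1 < (lc N al be K) ^ 2)%N.
Proof.
move=> hpos.
case: K hpos => [|K] hpos; first by rewrite /lcp mul0n expn_gt0 hpos.
rewrite /lcp.
set L := fun k => (be * k + al * (N.+1 - k))%N.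
have eK := lc_id N al be K.+1; have eKm := lc_id N al be K; have eKp := lc_id N al be K.+2.
rewrite -/(L _) in eK eKm eKp.
case: (leqP K.+2 N.+1) => hK; last first.
  rewrite (_ : lc N al be K.+2 = 0)%N; first by rewrite muln0 expn_gt0 hpos.
  by rewrite /lc /= !bin_small; lia.
have hbin := @bin_lc N.+1 K.+1 isT hK.
rewrite /= in hbin.
have hL : (L K * L K.+2 <= L K.+1 ^ 2)%N.
  apply: amgm.
  have [d ed] : exists d, (N.+1 - K = d.+2)%N by exists (N.+1 - K - 2)%N; lia.
  have e1 : (N.+1 - K.+1 = d.+1)%N by lia.
  have e2 : (N.+1 - K.+2 = d)%N by lia.
  rewrite /L ed e1 e2; lia.
have hLpos : (0 < L K.+1)%N.
  have : (0 < N.+1 * lc N al be K.+1)%N by rewrite muln_gt0 hpos.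
  by rewrite eK muln_gt0 => /andP[].
suff : (N.+1 ^ 2 * (lc N al be K * lc N al be K.+2) < N.+1 ^ 2 * lc N al be K.+1 ^ 2)%N.
  by rewrite ltn_pmul2l // expn_gt0.
rewrite (_ : N.+1 ^ 2 * (lc N al be K * lc N al be K.+2) =
             (N.+1 * lc N al be K) * (N.+1 * lc N al be K.+2))%N; last by lia.
rewrite (_ : N.+1 ^ 2 * lc N al be K.+1 ^ 2 = (N.+1 * lc N al be K.+1) ^ 2)%N; last by lia.
rewrite eK eKm eKp.
set BK := 'C(N.+1, K.+1) in hbin *; set Bm := 'C(N.+1, K) in hbin *; set Bp := 'C(N.+1, K.+2) in hbin *.
apply: (@leq_ltn_trans (Bm * Bp * L K.+1 ^ 2)).
  rewrite (_ : Bm * L K * (Bp * L K.+2) = Bm * Bp * (L K * L K.+2))%N; last by lia.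
  by rewrite leq_mul2l hL orbT.
rewrite (_ : (BK * L K.+1) ^ 2 = BK ^ 2 * L K.+1 ^ 2)%N; last by lia.
by rewrite ltn_pmul2r // expn_gt0 hLpos.
Qed.

Lemma lc_pos N al be K : (K <= N.+1)%N -> (0 < K)%N || (0 < al)%N -> (0 < be)%N ->
  (0 < lc N al be K)%N.
Proof.
move=> hK h hb; rewrite /lc.
case: K hK h => [|K] hK h /=.
  by rewrite add0n muln_gt0 bin0 andbT; rewrite ltnn in h.
rewrite addn_gt0 muln_gt0 hb bin_gt0 /=; lia.
Qed.

Local Open Scope ring_scope.

Ltac fin_nat := rewrite ?mul0rn -?mulrnA ?add0r ?addr0 -?natrD; congr (_%:R); nia.

Lemma Gz_coef a b I J : (1 <= a)%N -> (2 <= b)%N -> (I + J + 1 = a + b - 1)%N ->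
  (Gz a b)@_(mk3 I J 1) = (lc (a + b - 3) (a - 1) (b - 1) I)%:R.
Proof.
move=> ha hb e.
rewrite /Gz mcoeffD bin01 /= add0r mulX2 mulrDr !mulrnAr mcoeffD !mcoeffMn.
rewrite (mulrC _ 'X_ix) (mulrC _ 'X_iy) mulX0 mulX1 /lc.
case: I e => [|I] e; case: J e => [|J] e /=.
- lia.
- rewrite !bin01 /= (_ : (0 + J == a + b - 3)%N = true); last by apply/eqP; lia.
  fin_nat.
- rewrite !bin01 /= (_ : (I + 0 == a + b - 3)%N = true); last by apply/eqP; lia.
  rewrite (@bin_small (a + b - 3) I.+1); last by lia.
  fin_nat.
- rewrite !bin01 /= (_ : (I + J.+1 == a + b - 3)%N = true); last by apply/eqP; lia.
  rewrite (_ : (I.+1 + J == a + b - 3)%N = true); last by apply/eqP; lia.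
  fin_nat.
Qed.

Lemma Gz_coef0 a b I J : (I + J = a + b - 1)%N ->
  (Gz a b)@_(mk3 I J 0) = ('C(a + b - 1, I))%:R.
Proof.
move=> e; rewrite /Gz mcoeffD bin01 /= mulX2 addr0.
by rewrite (_ : (I + J == a + b - 1)%N = true) //; apply/eqP.
Qed.

Lemma Gy_coef a b I K : (1 <= a)%N -> (3 <= b)%N -> (I + 1 + K = a + b - 1)%N ->
  (Gy a b)@_(mk3 I 1 K) = if (a <= I)%N then (lc (b - 3) (3 * a - 1) (a + b - 1) (I - a))%:R else 0.
Proof.
move=> ha hb e.
rewrite /Gy mcoeffD powX0.
rewrite (_ : (if (a <= I)%N then (('X_ix + 'X_iz) ^+ (b - 1))@_(mk3 (I - a) 1 K) else 0) = 0); last first.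
  by case: ifP => // _; rewrite bin02.
rewrite add0r mulX1 -mulrA powX0; case: ifP => // haI.
rewrite mulrDr !mulrnAr mcoeffD !mcoeffMn (mulrC _ 'X_ix) (mulrC _ 'X_iz) mulX0 mulX2 /lc.
case hK : (I - a)%N => [|K'].
- case: K e hK => [|K] e hK /=; first lia.
  rewrite bin02 /= (_ : (0 + K == b - 3)%N = true); last by apply/eqP; lia.
  fin_nat.
- case: K e hK => [|K] e hK /=.
  + rewrite bin02 /= (_ : (K' + 0 == b - 3)%N = true); last by apply/eqP; lia.
    rewrite (@bin_small (b - 3) K'.+1); last by lia.
    fin_nat.
  + rewrite !bin02 /= (_ : (K' + K.+1 == b - 3)%N = true); last by apply/eqP; lia.
    rewrite (_ : (K'.+1 + K == b - 3)%N = true); last by apply/eqP; lia.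
    fin_nat.
Qed.

Lemma coefA_nat n P (I J : nat) :
  coefA n P I J = if (I + J <= n)%N then P@_(mk3 I J (n - I - J)) else 0.
Proof.
rewrite /coefA.
have -> : ((0 <= I%:Z) && (0 <= J%:Z) && (I%:Z + J%:Z <= n%:Z)) = (I + J <= n)%N.
  by apply/idP/idP; lia.
by [].
Qed.

Lemma coefA_neg n P i j : (i < 0) || (j < 0) -> coefA n P i j = 0.
Proof.
move=> h; rewrite /coefA; case: ifP => // /andP[/andP[h1 h2] _].
by move: h; lia.
Qed.

Lemma PoszS1 (I : nat) : (I.+1%:Z - 1 = I%:Z)%R. Proof. lia. Qed.
Lemma PoszP1 (I : nat) : (I%:Z + 1 = I.+1%:Z)%R. Proof. lia. Qed.

Lemma inDelta_nat a b (I J : nat) : (0 < a)%N -> (0 < b)%N ->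
  in_Delta a b I J = (a * b <= I * b + J * a)%N && (I + J <= a + b - 1)%N.
Proof.
move=> ha hb; rewrite /in_Delta.
have -> : ((I%:Z)%:~R / a%:R + (J%:Z)%:~R / b%:R : rat) = (I * b + J * a)%:R / (a * b)%:R.
  rewrite -[(I%:Z)%:~R]/(I%:R : rat) -[(J%:Z)%:~R]/(J%:R : rat) natrD !natrM.
  have ha' : (a%:R : rat) != 0 by rewrite pnatr_eq0 -lt0n.
  have hb' : (b%:R : rat) != 0 by rewrite pnatr_eq0 -lt0n.
  by field; rewrite ha' hb'.
rewrite ler_pdivlMr; last by rewrite ltr0n muln_gt0 ha hb.
rewrite mul1r ler_nat.
have -> : (I%:Z + J%:Z <= (a + b)%:Z - 1) = (I + J <= a + b - 1)%N by apply/idP/idP; lia.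
by rewrite le0z_nat.
Qed.

Lemma fin_ineq (x y z : nat) (w : int) : (0 < y)%N -> (x * z < y ^ 2)%N ->
  (w = z%:R \/ w = 0) -> (x%:R * w < (y%:R) ^+ 2 :> int).
Proof.
move=> hy h [->|->].
  by rewrite -natrM -natrX ltr_nat.
by rewrite mulr0 exprn_gt0 // ltr0n.
Qed.

Lemma line2 a b (P : mpZ3) : (1 <= a)%N -> (2 <= b)%N ->
  (forall m : 'X_{1..3}, (m iz <= 1)%N -> P@_m = (Gz a b)@_m) ->
  forall i j : int, in_Delta a b i j -> i + j = (a + b)%:Z - 2 ->
     coefA (a + b - 1) P i j ^+ 2
       > coefA (a + b - 1) P (i - 1) (j + 1) * coefA (a + b - 1) P (i + 1) (j - 1).
Proof.
move=> ha hb hZ i j hD hij.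
case: i hD hij => [I|I]; last by rewrite /in_Delta; lia.
case: j => [J|J]; last by rewrite /in_Delta; lia.
move=> hD hij; rewrite inDelta_nat in hD; [|lia|lia].
case/andP: hD => hD1 hD2.
have hIJ : (I + J = a + b - 2)%N by lia.
clear hij.
have cI : coefA (a + b - 1) P I J = (lc (a + b - 3) (a - 1) (b - 1) I)%:R.
  rewrite coefA_nat (_ : (I + J <= a + b - 1)%N = true); last by lia.
  rewrite (_ : (a + b - 1 - I - J = 1)%N); last by lia.
  by rewrite hZ ?mk3E2 // Gz_coef //; lia.
have cm : coefA (a + b - 1) P (I%:Z - 1) (J%:Z + 1) = (lcp (a + b - 3) (a - 1) (b - 1) I)%:R.
  case: I hIJ hD1 hD2 cI => [|I] hIJ hD1 hD2 cI.
    by rewrite coefA_neg //; lia.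
  rewrite PoszS1 PoszP1 coefA_nat (_ : (I + J.+1 <= a + b - 1)%N = true); last by lia.
  rewrite (_ : (a + b - 1 - I - J.+1 = 1)%N); last by lia.
  by rewrite hZ ?mk3E2 // Gz_coef //; lia.
have cp : coefA (a + b - 1) P (I%:Z + 1) (J%:Z - 1) = (lc (a + b - 3) (a - 1) (b - 1) I.+1)%:R
          \/ coefA (a + b - 1) P (I%:Z + 1) (J%:Z - 1) = 0.
  case: J hIJ hD1 hD2 {cI cm} => [|J] hIJ hD1 hD2.
    by right; rewrite coefA_neg //; lia.
  left; rewrite PoszS1 PoszP1 coefA_nat (_ : (I.+1 + J <= a + b - 1)%N = true); last by lia.
  rewrite (_ : (a + b - 1 - I.+1 - J = 1)%N); last by lia.
  by rewrite hZ ?mk3E2 // Gz_coef //; lia.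
have hpos : (0 < lc (a + b - 3) (a - 1) (b - 1) I)%N.
  apply: lc_pos; [lia | | lia].
  case: (posnP I) => [I0|hI0]; last by apply/orP; left.
  apply/orP; right; subst I; move: hD1; nia.
rewrite cI cm; apply: fin_ineq; [exact: hpos | exact: lc_logconc | exact: cp].
Qed.

Lemma line1 a b (P : mpZ3) : (1 <= a)%N -> (a < b)%N -> (3 <= b)%N ->
  (forall m : 'X_{1..3}, (m iy <= 1)%N -> P@_m = (Gy a b)@_m) ->
  forall i : int, in_Delta a b i 1 ->
     coefA (a + b - 1) P i 1 ^+ 2
       > coefA (a + b - 1) P (i - 1) 1 * coefA (a + b - 1) P (i + 1) 1.
Proof.
move=> ha hab hb hY i.
case: i => [I|I]; last by rewrite /in_Delta; lia.
move=> hD; rewrite (@inDelta_nat a b I 1) in hD; [|lia|lia].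
case/andP: hD => hD1 hD2.
have haI : (a <= I)%N.
  case: (leqP a I) => // hI; exfalso.
  have : (I * b <= (a - 1) * b)%N by apply: leq_mul; lia.
  nia.
set N := (b - 3)%N; set al := (3 * a - 1)%N; set be := (a + b - 1)%N.
have cI : coefA (a + b - 1) P I 1 = (lc N al be (I - a))%:R.
  rewrite coefA_nat (_ : (I + 1 <= a + b - 1)%N = true); last by lia.
  rewrite hY ?mk3E1 // Gy_coef //; last by lia.
  by rewrite haI.
have cm : coefA (a + b - 1) P (I%:Z - 1) 1 = (lcp N al be (I - a))%:R.
  case: I hD1 hD2 haI cI => [|I] hD1 hD2 haI cI; first by lia.
  rewrite PoszS1 coefA_nat (_ : (I + 1 <= a + b - 1)%N = true); last by lia.
  rewrite hY ?mk3E1 // Gy_coef //; last by lia.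
  case: ifP => hai.
    by rewrite (_ : (I.+1 - a = (I - a).+1)%N) //; lia.
  by rewrite (_ : (I.+1 - a = 0)%N) //; lia.
have cp : coefA (a + b - 1) P (I%:Z + 1) 1 = (lc N al be (I - a).+1)%:R
          \/ coefA (a + b - 1) P (I%:Z + 1) 1 = 0.
  rewrite PoszP1 coefA_nat; case: ifP => hle; last by right.
  left; rewrite hY ?mk3E1 // Gy_coef //; last by lia.
  rewrite (_ : (a <= I.+1)%N = true); last by lia.
  by rewrite (_ : (I.+1 - a = (I - a).+1)%N) //; lia.
have hpos : (0 < lc N al be (I - a))%N.
  by apply: lc_pos; rewrite /N /al /be; lia.
rewrite cI cm; apply: fin_ineq; [exact: hpos | exact: lc_logconc | exact: cp].
Qed.

Lemma id11P (F : fieldType) (sP x y z : F) : z != 0 ->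
  (x ^+ 2 + y ^+ 2) / z = sP / (x ^+ 0 * y ^+ 0 * z ^+ 1) -> sP = x ^+ 2 + y ^+ 2.
Proof.
move=> hz e.
have : sP = (sP / (x ^+ 0 * y ^+ 0 * z ^+ 1)) * z by fld.
by rewrite -e => ->; fld.
Qed.

Lemma U_iy_mk3 : U_(iy)%MM = mk3 0 1 0.
Proof. by apply: mk3P; rewrite mnm1E. Qed.

Lemma case11 (M : nat -> nat -> RF) (P : mpZ3) : is_markov_family M ->
  M 1%N 1%N = sq_subst P / (xF ^+ (1 - 1) * yF ^+ (1 - 1) * zF ^+ (1 + 1 - 1)) ->
  (forall i : int, in_Delta 1 1 i 1 ->
     coefA (1 + 1 - 1) P i 1 ^+ 2
       > coefA (1 + 1 - 1) P (i - 1) 1 * coefA (1 + 1 - 1) P (i + 1) 1) /\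
  (forall i j : int, in_Delta 1 1 i j -> i + j = (1 + 1)%:Z - 2 ->
     coefA (1 + 1 - 1) P i j ^+ 2
       > coefA (1 + 1 - 1) P (i - 1) (j + 1) * coefA (1 + 1 - 1) P (i + 1) (j - 1)).
Proof.
case=> _ _ e11 _ hP.
rewrite e11 in hP.
have eP := id11P zF_neq0 hP.
have hc : forall m : 'X_{1..3}, (m iz + m iz < 2)%N -> P@_m = ('X_ix + 'X_iy : mpZ3)@_m.
  apply: (extract (i := iz)); rewrite -!sq_substE eP sqmD sqX0 sqX1 subrr.
  exact: inO_0.
have c010 : P@_(mk3 0 1 0) = 1.
  rewrite hc ?mk3E2 // -U_iy_mk3 mcoeffD !mcoeffXU.
  by rewrite eqxx.
split.
- move=> i; case: i => [I|I]; last by rewrite /in_Delta; lia.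
  move=> hD; rewrite (@inDelta_nat 1 1 I 1) in hD; [|lia|lia].
  have I0 : I = 0%N by lia.
  subst I; rewrite coefA_neg; last by lia.
  by rewrite mul0r coefA_nat /= c010 expr1n ltr01.
- move=> i j; case: i => [I|I]; last by rewrite /in_Delta; lia.
  case: j => [J|J]; last by rewrite /in_Delta; lia.
  move=> hD hij; rewrite (@inDelta_nat 1 1 I J) in hD; [|lia|lia].
  exfalso; move: hD hij; lia.
Qed.

Unset Implicit Arguments.
Theorem theorem6p6 (M : nat -> nat -> RF) (a b : nat) (P : mpZ3) :
  is_markov_family M ->
  (1 <= a)%N -> (a <= b)%N -> coprime a b ->
  P \is (a + b - 1)%N.-homog ->
  M a b = sq_subst P / (xF ^+ (a - 1) * yF ^+ (b - 1) * zF ^+ (a + b - 1)) ->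
  (forall i : int, in_Delta a b i 1 ->
     coefA (a + b - 1) P i 1 ^+ 2
       > coefA (a + b - 1) P (i - 1) 1 * coefA (a + b - 1) P (i + 1) 1) /\
  (forall i j : int, in_Delta a b i j -> i + j = (a + b)%:Z - 2 ->
     coefA (a + b - 1) P i j ^+ 2
       > coefA (a + b - 1) P (i - 1) (j + 1) * coefA (a + b - 1) P (i + 1) (j - 1)).
Proof.
move=> hM ha hab cop _ hP.
have inab : in_index a b by rewrite /in_index cop hab.
have [_ _ sz _ sy] := all_facts hM inab.
case: (ltnP b 2) => hb.
  have b1 : b = 1%N by lia.
  have a1 : a = 1%N by lia.
  subst a b; exact: (case11 hM hP).
have ha0 : (0 < a)%N by lia.
have hb0 : (0 < b)%N by lia.
have hZ := @coefZZ M a b P ha hb hP (sz ha0 hb0).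
split; last exact: (@line2 a b P ha hb hZ).
case: (ltnP b 3) => hb3.
  have b2 : b = 2%N by lia.
  subst b.
  have a1 : a = 1%N.
    case: a ha hab cop {hP hZ inab sz sy ha0} => [//|[//|[|//]]] _ _.
    by rewrite /coprime.
  subst a.
  move=> i; case: i => [I|I]; last by rewrite /in_Delta; lia.
  move=> hD; rewrite (@inDelta_nat 1 2 I 1) in hD; [|lia|lia].
  have I1 : I = 1%N by lia.
  subst I.
  have c1 : coefA (1 + 2 - 1) P 1 1 = 2%:R.
    rewrite coefA_nat /= hZ ?mk3E2 //.
    by rewrite Gz_coef0.
  rewrite PoszP1 (coefA_nat _ _ 2 1) /= mulr0 c1.
  by [].
have hab' : (a < b)%N.
  rewrite ltn_neqAle hab andbT; apply/eqP => eab; subst a.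
  by move: cop; rewrite /coprime gcdnn => /eqP; lia.
have hb1 : (1 < b)%N by lia.
exact: (@line1 a b P ha hab' hb3 (@coefYY M a b P ha hb3 hP (sy hb1))).
Qed.
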